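(* Let $\Gamma_1$ be a represented pointclass satisfying the standing assumptions, containing the closed sets and (uniformly computably) closed under finite unions and under the operation $(A_n)_{n\in\mathbb{N}}\mapsto\{0^\mathbb{N}\}\cup\bigcup_{n\in\mathbb{N}}0^n1A_n$. Let $\Gamma=\Gamma_1\cup\overline{\Gamma_1}$ (the closure under complements), also satisfying the standing assumptions. Then $\widehat{\mathrm{Win}_{\Gamma_1}}\leq_W\mathrm{SPE}_\Gamma$.
   Context: $f\leq_W g$ iff there are computable partial $K,H$ on $\mathbb{N}^\mathbb{N}$ such that for every realizer $G$ of $g$, $p\mapsto K(\langle p,G(H(p))\rangle)$ realizes $f$. $\widehat{f}(x_0,x_1,\ldots)=(f(x_0),f(x_1),\ldots)$. $\overline{\Delta}=\{U^C\mid U\in\Delta\}$; $wA=\{wp\mid p\in A\}$. Games: infinite sequential games with choices $\{0,1\}$, players, turn function $d:\{0,1\}^*\to A$, outcomes $O$, valuation $v$, preferences with well-founded inverses; strategy profiles $s:\{0,1\}^*\to\{0,1\}$; play induced from history $\lambda$: $p_n=\lambda_n$ for $n<|\lambda|$, else $p_n=s(p_{<n})$. Nash equilibrium: no player can unilaterally switch strategy to get a strictly preferred outcome; subgame perfect: Nash equilibrium of the game started at every history. Named by numbers of players/outcomes, $d$ and preferences as tables, and for each player $a$ and upper set $U$ w.r.t. $\prec_a$ a $\Gamma$-name of $v^{-1}(U)$. Win/lose games: two players, outcomes $w_1,w_2$, player $i$ prefers $w_i$. $\mathrm{Win}_\Delta$: input a win/lose game with player-1 winning set given by a $\Delta$-name;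 output which player has a winning strategy. $\mathrm{SPE}_\Gamma$: input a two-player game with finitely many outcomes and antagonistic linear preferences; output a subgame perfect equilibrium. Standing assumptions on a pointclass: its win/lose games are determined; contains $\emptyset,\{0,1\}^\mathbb{N}$; uniformly computable closure under rescaling and its inverse and intersection with clopens. *)

(* Defs.v *)
From Stdlib Require Import Arith List Cantor.
Import ListNotations.

Definition Baire := nat -> nat.
Definition Cantor := nat -> bool.

Definition prefix {A} (x : nat -> A) (k : nat) : list A := map x (seq 0 k).
Fixpoint lcode (l : list nat) : nat :=
  match l with [] => 0 | a :: l' => S (to_nat (a, lcode l')) end.
Definition wcode (w : list bool) : nat := lcode (map Nat.b2n w).

Definition pairB (p q : Baire) : Baire :=
  fun n => if Nat.even n then p (Nat.div2 n) else q (Nat.div2 n).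
Definition tupleB (ps : nat -> Baire) : Baire :=
  fun m => let (i, j) := of_nat m in ps i j.
Definition projB (i : nat) (p : Baire) : Baire := fun j => p (to_nat (i, j)).
Definition cst (c : nat) : Baire := fun _ => c.
Definition tl (p : Baire) : Baire := fun n => p (S n).

Inductive prf : Type :=
| PZero | PSucc | PId | PFst | PSnd
| PPair (f g : prf) | PComp (f g : prf) | PRec (f g : prf) | PMu (f : prf).

Inductive eval : prf -> nat -> nat -> Prop :=
| eZero x : eval PZero x 0
| eSucc x : eval PSucc x (S x)
| eId x : eval PId x x
| eFst x : eval PFst x (fst (of_nat x))
| eSnd x : eval PSnd x (snd (of_nat x))
| ePair f g x y z : eval f x y -> eval g x z -> eval (PPair f g) x (to_nat (y, z))
| eComp f g x y z : eval g x y -> eval f y z -> eval (PComp f g) x z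
| eRec0 f g x a y : of_nat x = (a, 0) -> eval f a y -> eval (PRec f g) x y
| eRecS f g x a n z y : of_nat x = (a, S n) ->
    eval (PRec f g) (to_nat (a, n)) z ->
    eval g (to_nat (a, to_nat (n, z))) y -> eval (PRec f g) x y
| eMu f x n : eval f (to_nat (x, n)) 0 ->
    (forall m, m < n -> exists k, eval f (to_nat (x, m)) (S k)) ->
    eval (PMu f) x n.

(** Oracle machine [e] on oracle [p] produces output [q]: to compute [q n] it
    queries [e] on [(n, p|k)] for k = 0,1,2,...; answer 0 means "read more",
    answer [S m] means output [m]. *)
Definition computes (e : prf) (p q : Baire) : Prop :=
  forall n, exists k,
    eval e (to_nat (n, lcode (prefix p k))) (S (q n)) /\
    forall j, j < k -> eval e (to_nat (n, lcode (prefix p j))) 0.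

Definition computable (F : Baire -> option Baire) : Prop :=
  exists e, forall p q, F p = Some q -> computes e p q.

Definition realizes {X Y : Type} (dX : Baire -> X -> Prop) (dY : Baire -> Y -> Prop)
  (f : X -> Y -> Prop) (F : Baire -> option Baire) : Prop :=
  forall p x, dX p x -> (exists y, f x y) ->
    exists q, F p = Some q /\ exists y, dY q y /\ f x y.

Definition wcomp (K H G : Baire -> option Baire) (p : Baire) : option Baire :=
  match H p with
  | Some r => match G r with Some s => K (pairB p s) | None => None end
  | None => None
  end.

Definition Wred {X Y X' Y' : Type}
  (dX : Baire -> X -> Prop) (dY : Baire -> Y -> Prop) (f : X -> Y -> Prop)
  (dX' : Baire -> X' -> Prop) (dY' : Baire -> Y' -> Prop) (g : X' -> Y' -> Prop) : Prop :=
  exists K H, computable K /\ computable H /\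
    forall G, realizes dX' dY' g G -> realizes dX dY f (wcomp K H G).

Definition hat_rep {X : Type} (dX : Baire -> X -> Prop) : Baire -> (nat -> X) -> Prop :=
  fun p xs => forall i, dX (projB i p) (xs i).
Definition hat {X Y : Type} (f : X -> Y -> Prop) : (nat -> X) -> (nat -> Y) -> Prop :=
  fun xs ys => forall i, f (xs i) (ys i).

Inductive player := P1 | P2.
Definition player_code (a : player) : nat := match a with P1 => 0 | P2 => 1 end.

Fixpoint playpre (s : list bool -> bool) (h : list bool) (n : nat) : list bool :=
  match n with
  | 0 => []
  | S m => let l := playpre s h m in
           l ++ [if m <? length h then nth m h false else s l]
  end.
Definition play (s : list bool -> bool) (h : list bool) : Cantor :=
  fun n => nth n (playpre s h (S n)) false.

Definition has_win (d : list bool -> player) (A : Cantor -> Prop) (a : player) : Prop :=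
  exists sigma : list bool -> bool, forall s : list bool -> bool,
    (forall w, d w = a -> s w = sigma w) ->
    match a with P1 => A (play s []) | P2 => ~ A (play s []) end.

(** Two-player games with finitely many outcomes [0..nout-1];
    [g_pref a o o' = true] means player [a] strictly prefers [o'] to [o]. *)
Record game2 := {
  g_nout : nat;
  g_turn : list bool -> player;
  g_val : Cantor -> nat;
  g_val_lt : forall x, g_val x < g_nout;
  g_pref : player -> nat -> nat -> bool }.

Definition antag_linear (G : game2) : Prop :=
  (forall o, o < g_nout G -> g_pref G P1 o o = false) /\
  (forall o1 o2 o3, o1 < g_nout G -> o2 < g_nout G -> o3 < g_nout G ->
      g_pref G P1 o1 o2 = true -> g_pref G P1 o2 o3 = true -> g_pref G P1 o1 o3 = true) /\
  (forall o1 o2, o1 < g_nout G -> o2 < g_nout G -> o1 <> o2 ->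
      g_pref G P1 o1 o2 = true \/ g_pref G P1 o2 o1 = true) /\
  (forall o1 o2, o1 < g_nout G -> o2 < g_nout G ->
      g_pref G P2 o1 o2 = g_pref G P1 o2 o1).

Definition is_NE (G : game2) (s : list bool -> bool) (h : list bool) : Prop :=
  forall (a : player) (s' : list bool -> bool),
    (forall w, g_turn G w <> a -> s' w = s w) ->
    g_pref G a (g_val G (play s h)) (g_val G (play s' h)) = false.

Definition is_SPE (G : game2) (s : list bool -> bool) : Prop :=
  forall h, is_NE G s h.

Definition upper_set (G : game2) (a : player) (U : nat -> Prop) : Prop :=
  (forall o, U o -> o < g_nout G) /\
  (forall o o', U o -> o' < g_nout G -> g_pref G a o o' = true -> U o').

Definition pcrep := Baire -> (Cantor -> Prop) -> Prop.

Definition rep_functional (nm : pcrep) : Prop :=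
  forall p A B, nm p A -> nm p B -> A = B.

Definition prepend (w : list bool) (x : Cantor) : Cantor :=
  fun n => if n <? length w then nth n w false else x (n - length w).
Definition has_prefix (w : list bool) (x : Cantor) : Prop := prefix x (length w) = w.
Definition rescale (w : list bool) (A : Cantor -> Prop) : Cantor -> Prop :=
  fun x => has_prefix w x /\ A (fun n => x (length w + n)).
Definition unrescale (w : list bool) (A : Cantor -> Prop) : Cantor -> Prop :=
  fun x => A (prepend w x).
Definition clopen (l : list (list bool)) : Cantor -> Prop :=
  fun x => exists w, In w l /\ has_prefix w x.
Definition lwcode (l : list (list bool)) : nat := lcode (map wcode l).

Definition standing (nm : pcrep) : Prop :=
  (forall d A p, nm p A -> has_win d A P1 \/ has_win d A P2) /\
  (exists p, nm p (fun _ => False)) /\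
  (exists p, nm p (fun _ => True)) /\
  (exists e, forall w p A, nm p A ->
     exists q, computes e (pairB (cst (wcode w)) p) q /\ nm q (rescale w A)) /\
  (exists e, forall w p A, nm p A ->
     exists q, computes e (pairB (cst (wcode w)) p) q /\ nm q (unrescale w A)) /\
  (exists e, forall l p A, nm p A ->
     exists q, computes e (pairB (cst (lwcode l)) p) q /\
               nm q (fun x => A x /\ clopen l x)).

(** names of closed subsets of Cantor space: sets of paths of a tree given by
    its characteristic function (0 = in the tree) *)
Definition closed_name (p : Baire) (A : Cantor -> Prop) : Prop :=
  forall x, A x <-> forall k, p (wcode (prefix x k)) = 0.

Definition contains_closed (nm : pcrep) : Prop :=
  exists e, forall p A, closed_name p A -> exists q, computes e p q /\ nm q A.

Definition closed_union (nm : pcrep) : Prop :=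
  exists e, forall p q A B, nm p A -> nm q B ->
    exists r, computes e (pairB p q) r /\ nm r (fun x => A x \/ B x).

Definition zero_op (As : nat -> Cantor -> Prop) : Cantor -> Prop :=
  fun x => (forall k, x k = false) \/
           exists n, (forall k, k < n -> x k = false) /\ x n = true /\
                     As n (fun m => x (S n + m)).

Definition closed_zero_op (nm : pcrep) : Prop :=
  exists e, forall (ps : nat -> Baire) (As : nat -> Cantor -> Prop),
    (forall n, nm (ps n) (As n)) ->
    exists r, computes e (tupleB ps) r /\ nm r (zero_op As).

(** Gamma_1 u complements(Gamma_1): a bit selecting whether the rest names the
    set or its complement *)
Definition compl_closure (nm : pcrep) : pcrep :=
  fun p A => (p 0 = 0 /\ nm (tl p) A) \/
             (p 0 = 1 /\ exists B, nm (tl p) B /\ forall x, A x <-> ~ B x).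

Definition win_rep (nm : pcrep) : Baire -> (list bool -> player) * (Cantor -> Prop) -> Prop :=
  fun p dA => (forall w, projB 0 p (wcode w) = player_code (fst dA w)) /\
              nm (projB 1 p) (snd dA).
Definition pl_rep : Baire -> player -> Prop := fun q a => q 0 = player_code a.
Definition Win (dA : (list bool -> player) * (Cantor -> Prop)) (a : player) : Prop :=
  has_win (fst dA) (snd dA) a.

Definition game_rep (nm : pcrep) : Baire -> game2 -> Prop :=
  fun p G =>
    projB 0 p 0 = 2 /\ projB 0 p 1 = g_nout G /\
    (forall w, projB 1 p (wcode w) = player_code (g_turn G w)) /\
    (forall a o o', o < g_nout G -> o' < g_nout G ->
       projB 2 p (to_nat (player_code a, to_nat (o, o'))) =
       (if g_pref G a o o' then 1 else 0)) /\
    (forall a u, u < 2 ^ g_nout G ->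
       upper_set G a (fun o => Nat.testbit u o = true) ->
       nm (projB (to_nat (player_code a, u)) (projB 3 p))
          (fun x => Nat.testbit u (g_val G x) = true)).
Definition strat_rep : Baire -> (list bool -> bool) -> Prop :=
  fun q s => forall w, q (wcode w) = (if s w then 1 else 0).
Definition SPE (G : game2) (s : list bool -> bool) : Prop :=
  antag_linear G /\ is_SPE G s.

(* Main.v *)
Require Import Defs.
From Stdlib Require Import Arith List Cantor Lia Classical ClassicalEpsilon IndefiniteDescription
  FunctionalExtensionality PropExtensionality.
Import ListNotations.

Lemma ofto a b : of_nat (to_nat (a, b)) = (a, b).
Proof. apply cancel_of_to. Qed.

Lemma eval_det_rec f g :
  (forall x y1 y2, eval f x y1 -> eval f x y2 -> y1 = y2) ->
  (forall x y1 y2, eval g x y1 -> eval g x y2 -> y1 = y2) ->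
  forall n x a, of_nat x = (a, n) -> forall y1 y2,
  eval (PRec f g) x y1 -> eval (PRec f g) x y2 -> y1 = y2.
Proof.
  intros Hf Hg n. induction n as [|n IH]; intros x a Hx y1 y2 H1 H2.
  - inversion H1 as [| | | | | | | f' g' x' a1 y' E1 F1 | f' g' x' a1 n1 z1 y' E1 | ]; subst; [|congruence].
    inversion H2 as [| | | | | | | f'' g'' x'' a2 y'' E2 F2 | f'' g'' x'' a2 n2 z2 y'' E2 | ]; subst; [|congruence].
    rewrite Hx in E1, E2. injection E1 as <-. injection E2 as <-. eauto.
  - inversion H1 as [| | | | | | | f' g' x' a1 y' E1 F1 | f' g' x' a1 n1 z1 y' E1 R1 G1 | ]; subst; [congruence|].
    inversion H2 as [| | | | | | | f'' g'' x'' a2 y'' E2 F2 | f'' g'' x'' a2 n2 z2 y'' E2 R2 G2| ]; subst; [congruence|].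
    rewrite Hx in E1, E2. injection E1 as <- <-. injection E2 as <- <-.
    assert (z1 = z2) by (eapply IH; [apply ofto|eassumption|eassumption]).
    subst. eauto.
Qed.

Lemma eval_det : forall e x y1 y2, eval e x y1 -> eval e x y2 -> y1 = y2.
Proof.
  induction e; intros x y1 y2 H1 H2.
  - inversion H1; inversion H2; subst; auto.
  - inversion H1; inversion H2; subst; auto.
  - inversion H1; inversion H2; subst; auto.
  - inversion H1; inversion H2; subst; auto.
  - inversion H1; inversion H2; subst; auto.
  - inversion H1; inversion H2; subst.
    assert (y = y0) by (eapply IHe1; eassumption). assert (z = z0) by (eapply IHe2; eassumption). subst; reflexivity.
  - inversion H1; inversion H2; subst.
    assert (y = y0) by (eapply IHe2; eassumption). subst. eapply IHe1; eassumption.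
  - destruct (of_nat x) as [a n] eqn:E. eapply (eval_det_rec e1 e2 IHe1 IHe2 n x a E); eauto.
  - inversion H1; inversion H2; subst.
    destruct (Nat.lt_trichotomy y1 y2) as [Hl|[Hl|Hl]]; auto.
    + destruct (H8 _ Hl) as [k Hk]. specialize (IHe _ _ _ H0 Hk). discriminate.
    + destruct (H3 _ Hl) as [k Hk]. specialize (IHe _ _ _ H7 Hk). discriminate.
Qed.


Lemma computes_det_pw e p q1 q2 : computes e p q1 -> computes e p q2 -> forall n, q1 n = q2 n.
Proof.
  intros H1 H2 n. destruct (H1 n) as [k1 [A1 B1]]. destruct (H2 n) as [k2 [A2 B2]].
  destruct (Nat.lt_trichotomy k1 k2) as [Hl|[Hl|Hl]].
  - specialize (B2 _ Hl). pose proof (eval_det _ _ _ _ A1 B2). discriminate.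
  - subst. pose proof (eval_det _ _ _ _ A1 A2). congruence.
  - specialize (B1 _ Hl). pose proof (eval_det _ _ _ _ A2 B1). discriminate.
Qed.

Lemma pair_ind (P : nat -> Prop) : (forall a b, P (to_nat (a, b))) -> forall x, P x.
Proof. intros H x. rewrite <- (cancel_to_of x). destruct (of_nat x). apply H. Qed.

Ltac pind x := pattern x; apply pair_ind; clear x; intros ?a ?b; rewrite ?ofto; cbn beta iota.

Definition tot (e : prf) (f : nat -> nat) := forall x, eval e x (f x).

Lemma tot_ext e f g : tot e f -> (forall x, f x = g x) -> tot e g.
Proof. intros H E x. rewrite <- E. apply H. Qed.

Lemma tot_zero : tot PZero (fun _ => 0). Proof. intro; constructor. Qed.
Lemma tot_succ : tot PSucc S. Proof. intro; constructor. Qed.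
Lemma tot_id : tot PId (fun x => x). Proof. intro; constructor. Qed.
Lemma tot_fst : tot PFst (fun x => fst (of_nat x)). Proof. intro; constructor. Qed.
Lemma tot_snd : tot PSnd (fun x => snd (of_nat x)). Proof. intro; constructor. Qed.
Lemma tot_comp f g F G : tot f F -> tot g G -> tot (PComp f g) (fun x => F (G x)).
Proof. intros H1 H2 x. econstructor; eauto. Qed.
Lemma tot_pair f g F G : tot f F -> tot g G -> tot (PPair f g) (fun x => to_nat (F x, G x)).
Proof. intros H1 H2 x. constructor; eauto. Qed.

Lemma ev_rec f g a n (ys : nat -> nat) :
  eval f a (ys 0) ->
  (forall m, m < n -> eval g (to_nat (a, to_nat (m, ys m))) (ys (S m))) ->
  eval (PRec f g) (to_nat (a, n)) (ys n).
Proof.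
  intros H0 HS. induction n as [|n IH].
  - eapply eRec0; [apply ofto|auto].
  - eapply eRecS; [apply ofto| |].
    + apply IH. intros; apply HS; lia.
    + apply HS; lia.
Qed.

Definition iterf (Init : nat -> nat) (Step : nat -> nat) (x : nat) : nat :=
  let (a, n) := of_nat x in Nat.iter n (fun s => Step (to_nat (a, s))) (Init a).

Definition piter (init step : prf) : prf :=
  PRec init (PComp step (PPair PFst (PComp PSnd PSnd))).

Lemma ev_eq e x y y' : eval e x y -> y = y' -> eval e x y'.
Proof. intros H <-; exact H. Qed.

Lemma ev_sel a m z : eval (PPair PFst (PComp PSnd PSnd)) (to_nat (a, to_nat (m, z))) (to_nat (a, z)).
Proof.
  pose proof (ePair PFst (PComp PSnd PSnd) (to_nat (a, to_nat (m, z))) _ _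
    (eFst _) (eComp _ _ _ _ _ (eSnd _) (eSnd _))) as H.
  eapply ev_eq; [exact H|]. rewrite ofto. cbn [fst snd]. rewrite ofto. reflexivity.
Qed.

Lemma tot_iter init step FI FS :
  tot init FI -> tot step FS -> tot (piter init step) (iterf FI FS).
Proof.
  intros HI HS x. unfold iterf. pind x. rename a into a', b into n. rename a' into a.
  apply (ev_rec _ _ a n (fun n => Nat.iter n (fun s => FS (to_nat (a, s))) (FI a))).
  - apply HI.
  - intros m _. econstructor; [apply ev_sel|]. apply HS.
Qed.

Fixpoint pconst (c : nat) : prf := match c with 0 => PZero | S c => PComp PSucc (pconst c) end.
Lemma tot_const c : tot (pconst c) (fun _ => c).
Proof. induction c; intro x; [constructor|]. econstructor; [apply IHc|constructor]. Qed.

Ltac simpof := repeat (progress (rewrite ?ofto; cbn [fst snd])).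

Lemma ev_snd2 a m z : eval (PComp PSnd PSnd) (to_nat (a, to_nat (m, z))) z.
Proof. eapply ev_eq; [econstructor; constructor|]. simpof. reflexivity. Qed.
Lemma ev_fst2 a m z : eval (PComp PFst PSnd) (to_nat (a, to_nat (m, z))) m.
Proof. eapply ev_eq; [econstructor; constructor|]. simpof. reflexivity. Qed.
Lemma ev_fst a b : eval PFst (to_nat (a, b)) a.
Proof. eapply ev_eq; [constructor|]. simpof. reflexivity. Qed.
Lemma ev_snd a b : eval PSnd (to_nat (a, b)) b.
Proof. eapply ev_eq; [constructor|]. simpof. reflexivity. Qed.

Definition f2 (F : nat -> nat -> nat) (x : nat) := let (a, b) := of_nat x in F a b.

Definition padd := PRec PId (PComp PSucc (PComp PSnd PSnd)).
Lemma tot_add : tot padd (f2 Nat.add).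
Proof.
  intro x. unfold f2. pind x. rename a into a', b into n. rename a' into a.
  apply (ev_rec _ _ a n (fun n => a + n)); [rewrite Nat.add_0_r; constructor|].
  intros m _. econstructor; [apply ev_snd2|].
  replace (a + S m) with (S (a + m)) by lia. constructor.
Qed.

Definition ppred1 := PRec PZero (PComp PFst PSnd).
Definition ppred := PComp ppred1 (PPair PZero PId).
Lemma tot_pred : tot ppred Nat.pred.
Proof.
  intro x. econstructor; [constructor; constructor|].
  apply (ev_rec _ _ 0 x Nat.pred); [constructor|].
  intros m _. apply ev_fst2.
Qed.

Definition psub := PRec PId (PComp ppred (PComp PSnd PSnd)).
Lemma tot_sub : tot psub (f2 Nat.sub).
Proof.
  intro x. unfold f2. pind x. rename a into a', b into n. rename a' into a.
  apply (ev_rec _ _ a n (fun n => a - n)); [rewrite Nat.sub_0_r; constructor|].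
  intros m _. econstructor; [apply ev_snd2|].
  replace (a - S m) with (Nat.pred (a - m)) by lia. apply tot_pred.
Qed.

Definition pifz := PRec PFst (PComp PSnd PFst).
Definition ifz (a b c : nat) := match c with 0 => a | _ => b end.
Lemma tot_ifz : tot pifz (fun x => let (ab, c) := of_nat x in let (a, b) := of_nat ab in ifz a b c).
Proof.
  intro x. pind x. rename a into ab, b into c. pind ab.
  apply (ev_rec _ _ (to_nat (a, b)) c (fun c => ifz a b c)).
  - apply ev_fst.
  - intros m _. econstructor; [apply ev_fst|]. apply ev_snd.
Qed.

Record Prog := { code : prf; fn : nat -> nat; ok : tot code fn }.

Definition Pzero : Prog := {| code := PZero; fn := fun _ => 0; ok := tot_zero |}.
Definition Pconst c : Prog := {| code := pconst c; fn := fun _ => c; ok := tot_const c |}.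
Definition Pid : Prog := {| code := PId; fn := fun x => x; ok := tot_id |}.
Definition Pfst : Prog := {| code := PFst; fn := fun x => fst (of_nat x); ok := tot_fst |}.
Definition Psnd : Prog := {| code := PSnd; fn := fun x => snd (of_nat x); ok := tot_snd |}.
Definition Pcomp (p q : Prog) : Prog :=
  {| code := PComp (code p) (code q); fn := fun x => fn p (fn q x);
     ok := tot_comp _ _ _ _ (ok p) (ok q) |}.
Definition Ppair (p q : Prog) : Prog :=
  {| code := PPair (code p) (code q); fn := fun x => to_nat (fn p x, fn q x);
     ok := tot_pair _ _ _ _ (ok p) (ok q) |}.

Lemma Padd_ok p q : tot (PComp padd (code (Ppair p q))) (fun x => fn p x + fn q x).
Proof.
  eapply tot_ext; [apply tot_comp; [apply tot_add|apply (ok (Ppair p q))]|].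
  intro x. cbn [fn Ppair]. unfold f2. rewrite ofto. reflexivity.
Qed.
Definition Padd p q : Prog := {| code := _; fn := _; ok := Padd_ok p q |}.

Lemma Psub_ok p q : tot (PComp psub (code (Ppair p q))) (fun x => fn p x - fn q x).
Proof.
  eapply tot_ext; [apply tot_comp; [apply tot_sub|apply (ok (Ppair p q))]|].
  intro x. cbn [fn Ppair]. unfold f2. rewrite ofto. reflexivity.
Qed.
Definition Psub p q : Prog := {| code := _; fn := _; ok := Psub_ok p q |}.

Lemma Pifz_ok a b c : tot (PComp pifz (code (Ppair (Ppair a b) c))) (fun x => ifz (fn a x) (fn b x) (fn c x)).
Proof.
  eapply tot_ext; [apply tot_comp; [apply tot_ifz|apply (ok (Ppair (Ppair a b) c))]|].
  intro x. cbn [fn Ppair]. rewrite !ofto. reflexivity.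
Qed.
Definition Pifz a b c : Prog := {| code := _; fn := _; ok := Pifz_ok a b c |}.

Definition Ppred p : Prog := {| code := PComp ppred (code p); fn := fun x => Nat.pred (fn p x);
   ok := tot_comp _ _ _ _ tot_pred (ok p) |}.

Definition Piter (init step : Prog) : Prog :=
  {| code := piter (code init) (code step); fn := iterf (fn init) (fn step);
     ok := tot_iter _ _ _ _ (ok init) (ok step) |}.

Definition Pext (p : Prog) (f : nat -> nat) (H : forall x, fn p x = f x) : Prog :=
  {| code := code p; fn := f; ok := tot_ext _ _ _ (ok p) H |}.

Definition Pltb p q := Pifz Pzero (Pconst 1) (Psub q p).
Lemma Pltb_fn p q x : fn (Pltb p q) x = if fn p x <? fn q x then 1 else 0.
Proof. unfold Pltb; cbn [fn Pifz Psub Pzero Pconst]. destruct (fn p x <? fn q x) eqn:E; [apply Nat.ltb_lt in E|apply Nat.ltb_ge in E];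
  destruct (fn q x - fn p x) eqn:E2; cbn; auto; lia. Qed.
Definition Peqb p q := Pifz (Pifz (Pconst 1) Pzero (Psub q p)) Pzero (Psub p q).
Lemma Peqb_fn p q x : fn (Peqb p q) x = if fn p x =? fn q x then 1 else 0.
Proof. unfold Peqb; cbn [fn Pifz Psub Pzero Pconst]. destruct (fn p x =? fn q x) eqn:E; [apply Nat.eqb_eq in E|apply Nat.eqb_neq in E].
  - rewrite E, Nat.sub_diag. reflexivity.
  - destruct (fn p x - fn q x) eqn:E2; cbn; auto. destruct (fn q x - fn p x) eqn:E3; cbn; auto; lia. Qed.

Definition P1of := Pfst.
Definition P2of := Psnd.
Definition Pfst_of p := Pcomp Pfst p.
Definition Psnd_of p := Pcomp Psnd p.

Definition Psucc_of (p : Prog) : Prog := {| code := PComp PSucc (code p); fn := fun x => S (fn p x);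
   ok := tot_comp _ _ _ _ tot_succ (ok p) |}.

Definition fb (H : nat -> nat) (a t : nat) : nat :=
  fold_right (fun m acc => H (to_nat (a, to_nat (m, acc)))) 0 (seq 0 t).

Definition fb_step (H : Prog) : Prog :=
  (* input to_nat (a', to_nat (i, acc)) where a' = to_nat (a, t) *)
  let a := Pcomp Pfst Pfst in
  let i := Pcomp Pfst Psnd in
  let acc := Pcomp Psnd Psnd in
  Ppair (Ppred i) (Pcomp H (Ppair a (Ppair (Ppred i) acc))).

Definition Pfb (H : Prog) : Prog :=
  Pcomp (Pcomp Psnd (Piter (Ppair Psnd Pzero) (fb_step H))) (Ppair Pid Psnd).

Lemma iter_ext {A} (f g : A -> A) n x : (forall y, f y = g y) -> Nat.iter n f x = Nat.iter n g x.
Proof. intros E; induction n; [reflexivity|]. rewrite !Nat.iter_succ, IHn, E. reflexivity. Qed.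

Lemma Pfb_fn H x : fn (Pfb H) x = let (a, t) := of_nat x in fb (fn H) a t.
Proof.
  pind x. unfold Pfb. cbn [fn Pcomp Ppair Psnd Pid Piter Pzero]. rewrite ofto. cbn [snd].
  unfold iterf. rewrite !ofto. cbn [snd].
  assert (forall s, s <= b -> Nat.iter s (fun s0 => fn (fb_step H) (to_nat (to_nat (a, b), s0)))
     (to_nat (b, 0)) =
     to_nat (b - s, fold_right (fun m acc => fn H (to_nat (a, to_nat (m, acc)))) 0 (seq (b - s) s))) as K.
  { induction s; intros Hs.
    - cbn. rewrite Nat.sub_0_r. reflexivity.
    - rewrite Nat.iter_succ, IHs by lia. unfold fb_step. cbn [fn Pcomp Ppair Ppred Pfst Psnd].
      simpof. f_equal. f_equal; [lia|].
      replace (b - S s) with (Nat.pred (b - s)) by lia. 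
      replace (b - s) with (S (Nat.pred (b - s))) at 2 by lia. reflexivity. }
  rewrite K by lia. rewrite ofto. cbn [snd]. rewrite Nat.sub_diag. reflexivity.
Qed.

Definition tlc (c : nat) := match c with 0 => 0 | S x => snd (of_nat x) end.
Definition hdc (c : nat) := match c with 0 => 0 | S x => fst (of_nat x) end.

Definition Ptlc : Prog := Pext (Pifz Pzero (Pcomp Psnd (Ppred Pid)) Pid) tlc
  (fun x => match x with 0 => eq_refl | S _ => eq_refl end).
Definition Phdc : Prog := Pext (Pifz Pzero (Pcomp Pfst (Ppred Pid)) Pid) hdc
  (fun x => match x with 0 => eq_refl | S _ => eq_refl end).

Lemma tlc_lcode a l : tlc (lcode (a :: l)) = lcode l.
Proof. change (lcode (a::l)) with (S (to_nat (a, lcode l))). unfold tlc. rewrite ofto. reflexivity. Qed.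
Lemma hdc_lcode a l : hdc (lcode (a :: l)) = a.
Proof. change (lcode (a::l)) with (S (to_nat (a, lcode l))). unfold hdc. rewrite ofto. reflexivity. Qed.

Definition dropc (i c : nat) := Nat.iter i tlc c.

Lemma dropc_lcode i l : dropc i (lcode l) = lcode (skipn i l).
Proof.
  unfold dropc. revert l; induction i; intros l; [reflexivity|].
  rewrite Nat.iter_succ_r. destruct l; cbn [skipn].
  - replace (tlc (lcode [])) with (lcode []) by reflexivity. rewrite IHi. now destruct i.
  - rewrite tlc_lcode. apply IHi.
Qed.

Definition Pdrop : Prog := Pext (Piter Pid (Pcomp Ptlc Psnd)) (fun x => let (c, i) := of_nat x in dropc i c)
  (fun x => ltac:(cbn [fn Piter Pid Pcomp Psnd Pext Ptlc]; unfold iterf; destruct (of_nat x) as [c i];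
     unfold dropc; apply iter_ext; intro y; rewrite ofto; reflexivity)).

Definition nthc (i c : nat) := hdc (dropc i c).
Definition Pnth : Prog := Pext (Pcomp Phdc Pdrop) (fun x => let (c, i) := of_nat x in nthc i c)
  (fun x => ltac:(cbn [fn Pcomp Pext Phdc Pdrop]; destruct (of_nat x); reflexivity)).

Lemma nthc_lcode i l : nthc i (lcode l) = nth i l 0.
Proof.
  unfold nthc. rewrite dropc_lcode. revert l; induction i; intros [|x l]; cbn [skipn nth]; auto.
  apply hdc_lcode.
Qed.

Lemma dropc_lcode_nz i l : dropc i (lcode l) <> 0 <-> i < length l.
Proof.
  rewrite dropc_lcode. revert l; induction i; intros [|x l]; cbn; split; intros; try lia; try discriminate.
  - apply IHi in H. lia.
  - apply IHi. lia.
Qed.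

Definition build (F : nat -> nat) (a t : nat) := lcode (map (fun m => F (to_nat (a, m))) (seq 0 t)).

Definition Pbuild (F : Prog) : Prog :=
  Pfb (Psucc_of (Ppair (Pcomp F (Ppair Pfst (Pcomp Pfst Psnd))) (Pcomp Psnd Psnd))).

Lemma Pbuild_fn F x : fn (Pbuild F) x = let (a, t) := of_nat x in build (fn F) a t.
Proof.
  unfold Pbuild. rewrite Pfb_fn. destruct (of_nat x) as [a t]. unfold fb, build.
  enough (forall k, fold_right (fun m acc => fn (Psucc_of (Ppair (Pcomp F (Ppair Pfst (Pcomp Pfst Psnd))) (Pcomp Psnd Psnd)))
       (to_nat (a, to_nat (m, acc)))) 0 (seq k t) = lcode (map (fun m => fn F (to_nat (a, m))) (seq k t))) by auto.
  induction t; intros k; [reflexivity|]. cbn [seq fold_right map lcode].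
  rewrite IHt. cbn [fn Psucc_of Ppair Pcomp Pfst Psnd]. simpof. reflexivity.
Qed.

Lemma least_ex (P : nat -> Prop) N : P N -> exists n, P n /\ forall m, m < n -> ~ P m.
Proof.
  induction N as [N IH] using (well_founded_induction lt_wf). intros HN.
  destruct (classic (exists m, m < N /\ P m)) as [[m [Hm Pm]]|Hn].
  - exact (IH m Hm Pm).
  - exists N. split; auto. intros m Hm Pm. apply Hn; eauto.
Qed.

Lemma prefix_length {A} (p : nat -> A) k : length (prefix p k) = k.
Proof. unfold prefix. rewrite length_map, length_seq. reflexivity. Qed.

Lemma prefix_nth p k m : m < k -> nth m (prefix p k) 0 = p m.
Proof.
  intros H. unfold prefix. rewrite nth_indep with (d' := p 0) by (rewrite length_map, length_seq; auto).
  rewrite map_nth, seq_nth by auto. reflexivity.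
Qed.

Lemma prefix_S {A} (p : nat -> A) k : prefix p (S k) = prefix p k ++ [p k].
Proof. unfold prefix. rewrite seq_S, map_app. reflexivity. Qed.

Lemma prefix_ext {A} (p q : nat -> A) k : (forall m, m < k -> p m = q m) -> prefix p k = prefix q k.
Proof.
  intros H. unfold prefix. apply map_ext_in. intros a Ha. apply in_seq in Ha. apply H. lia.
Qed.

Section Outer.
Variable e2 P : prf.
Variable Sg : Prog.

(* input to_nat (x, t), x = to_nat (m, c) *)
Definition o_g1 : Prog :=
  Ppair (Pcomp Pfst (Pcomp Sg (Pcomp Pfst Pfst))) (Ppair Psnd (Pcomp Psnd Pfst)).
Definition o_step1 : prf := PPair PId (PComp P (code o_g1)).
(* input y1 = to_nat (xt, av) *)
Definition o_g2 : Prog :=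
  Ppair (Pcomp Psnd (Pcomp Sg (Pcomp Pfst (Pcomp Pfst Pfst)))) (Ppred Psnd).
Definition o_step2 : prf := PPair PId (PComp e2 (code o_g2)).
(* input y2 = to_nat (y1, r) *)
Definition o_av : Prog := Pcomp Psnd Pfst.
Definition o_r : Prog := Psnd.
Definition o_cond3 : Prog := Pifz Pzero (Pifz (Pconst 1) Pzero o_r) o_av.
Definition o_fin3 : Prog := Pifz Pzero o_r o_av.
Definition o_cond : prf := PComp (code o_cond3) (PComp o_step2 o_step1).
Definition Outer : prf :=
  PComp (code o_fin3) (PComp o_step2 (PComp o_step1 (PPair PId (PMu o_cond)))).

Lemma o_chain (x t av r : nat) :
  eval P (fn o_g1 (to_nat (x, t))) av ->
  eval e2 (fn o_g2 (to_nat (to_nat (x, t), av))) r ->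
  forall (F : Prog), eval (PComp (code F) (PComp o_step2 o_step1)) (to_nat (x, t))
       (fn F (to_nat (to_nat (to_nat (x, t), av), r))).
Proof.
  intros H1 H2 F. econstructor; [|apply ok]. econstructor.
  - constructor; [constructor|]. econstructor; [apply ok|exact H1].
  - constructor; [constructor|]. econstructor; [apply ok|exact H2].
Qed.

Variable p : Baire.
Variable X R : nat -> Baire.
Variable av : nat -> nat -> nat -> bool.
Hypothesis HP : forall i t k, eval P (to_nat (i, to_nat (t, lcode (prefix p k))))
   (if av i t k then S (lcode (prefix (X i) t)) else 0).
Hypothesis Hmono : forall i t t' k, av i t k = true -> t' <= t -> av i t' k = true.
Hypothesis Hev : forall i t, exists k, av i t k = true.
Hypothesis Hc : forall i, computes e2 (X i) (R i).

Lemma Outer_ok : computes Outer p (fun m => let (i, j) := of_nat (fn Sg m) in R i j).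
Proof.
  intros m. destruct (of_nat (fn Sg m)) as [i j] eqn:Eij.
  destruct (Hc i j) as [T [HT HlT]].
  assert (E0 : exists w0, eval e2 (to_nat (j, 0)) w0).
  { destruct T as [|T]; [eexists; exact HT|]. exists 0. apply (HlT 0). lia. }
  destruct E0 as [w0 Hw0].
  assert (Hg1 : forall k t, fn o_g1 (to_nat (to_nat (m, lcode (prefix p k)), t)) = to_nat (i, to_nat (t, lcode (prefix p k)))).
  { intros k t. cbn [fn o_g1 Ppair Pcomp Pfst Psnd]. simpof. rewrite Eij. reflexivity. }
  assert (Hg2 : forall k t a, fn o_g2 (to_nat (to_nat (to_nat (m, lcode (prefix p k)), t), a)) = to_nat (j, Nat.pred a)).
  { intros k t a. cbn [fn o_g2 Ppair Pcomp Pfst Psnd Ppred]. simpof. rewrite Eij. reflexivity. }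
  assert (Hout : forall k, eval Outer (to_nat (m, lcode (prefix p k))) (if av i T k then S (R i j) else 0)).
  { intros k. set (x := to_nat (m, lcode (prefix p k))).
    assert (Hcond : forall t, av i t k = false -> eval o_cond (to_nat (x, t)) 0
              /\ eval Outer x 0 \/ True).
    { intros; right; auto. }
    clear Hcond.
    assert (Cf : forall t, av i t k = false ->
       eval (PComp (code o_cond3) (PComp o_step2 o_step1)) (to_nat (x, t)) 0 /\
       eval (PComp (code o_fin3) (PComp o_step2 o_step1)) (to_nat (x, t)) 0).
    { intros t Hf. assert (H1 := HP i t k). rewrite Hf in H1.
      rewrite <- (Hg1 k t) in H1. fold x in H1.
      assert (H2 : eval e2 (fn o_g2 (to_nat (to_nat (x, t), 0))) w0).
      { unfold x; rewrite Hg2. exact Hw0. }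
      split.
      - eapply ev_eq; [apply (o_chain _ _ _ _ H1 H2)|]. cbn [fn o_cond3 Pifz Pzero Pconst o_av o_r Pcomp Psnd Pfst]. simpof. reflexivity.
      - eapply ev_eq; [apply (o_chain _ _ _ _ H1 H2)|]. cbn [fn o_fin3 Pifz Pzero Pconst o_av o_r Pcomp Psnd Pfst]. simpof. reflexivity. }
    assert (Ct : forall t, av i t k = true -> t <= T ->
       eval (PComp (code o_cond3) (PComp o_step2 o_step1)) (to_nat (x, t)) (if t <? T then 1 else 0) /\
       eval (PComp (code o_fin3) (PComp o_step2 o_step1)) (to_nat (x, t)) (if t <? T then 0 else S (R i j))).
    { intros t Ht HtT. assert (H1 := HP i t k). rewrite Ht in H1.
      rewrite <- (Hg1 k t) in H1. fold x in H1.
      destruct (t <? T) eqn:Elt; [apply Nat.ltb_lt in Elt|apply Nat.ltb_ge in Elt].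
      - assert (H2 : eval e2 (fn o_g2 (to_nat (to_nat (x, t), S (lcode (prefix (X i) t))))) 0).
        { unfold x; rewrite Hg2. apply HlT. exact Elt. }
        split.
        + eapply ev_eq; [apply (o_chain _ _ _ _ H1 H2)|]. cbn [fn o_cond3 Pifz Pzero Pconst o_av o_r Pcomp Psnd Pfst]. simpof. reflexivity.
        + eapply ev_eq; [apply (o_chain _ _ _ _ H1 H2)|]. cbn [fn o_fin3 Pifz Pzero Pconst o_av o_r Pcomp Psnd Pfst]. simpof. reflexivity.
      - assert (t = T) by lia. subst t.
        assert (H2 : eval e2 (fn o_g2 (to_nat (to_nat (x, T), S (lcode (prefix (X i) T))))) (S (R i j))).
        { unfold x; rewrite Hg2. exact HT. }
        split.
        + eapply ev_eq; [apply (o_chain _ _ _ _ H1 H2)|]. cbn [fn o_cond3 Pifz Pzero Pconst o_av o_r Pcomp Psnd Pfst]. simpof. reflexivity.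
        + eapply ev_eq; [apply (o_chain _ _ _ _ H1 H2)|]. cbn [fn o_fin3 Pifz Pzero Pconst o_av o_r Pcomp Psnd Pfst]. simpof. reflexivity. }
    assert (Hfin : forall n v, eval (PMu o_cond) x n ->
       eval (PComp (code o_fin3) (PComp o_step2 o_step1)) (to_nat (x, n)) v -> eval Outer x v).
    { intros n v Hm Hf. inversion Hf as [| | | | | |f g x0 y z Hy Hz| | |]; subst.
      inversion Hy as [| | | | | |f' g' x1 y1 z1 Hy1 Hz1| | |]; subst.
      unfold Outer. econstructor; [|exact Hz]. econstructor; [|exact Hz1].
      econstructor; [|exact Hy1]. eapply ev_eq; [constructor; [constructor|exact Hm]|]. reflexivity. }
    destruct (av i T k) eqn:EavT.
    -
      assert (Hm : eval (PMu o_cond) x T).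
      { constructor.
        - destruct (Ct T EavT (le_n _)) as [A _]. rewrite Nat.ltb_irrefl in A. exact A.
        - intros t Ht. exists 0. destruct (Ct t (Hmono _ _ _ _ EavT (Nat.lt_le_incl _ _ Ht)) (Nat.lt_le_incl _ _ Ht)) as [A _].
          apply Nat.ltb_lt in Ht. rewrite Ht in A. exact A. }
      apply (Hfin _ _ Hm). destruct (Ct T EavT (le_n _)) as [_ B]. rewrite Nat.ltb_irrefl in B. exact B.
    - destruct (least_ex (fun t => av i t k = false) T EavT) as [t0 [Ht0 Hl0]].
      assert (Ht0T : t0 <= T).
      { destruct (Nat.le_gt_cases t0 T); auto. exfalso. apply (Hl0 T); auto. }
      assert (Hm : eval (PMu o_cond) x t0).
      { constructor.
        - apply (Cf t0 Ht0).
        - intros t Ht. exists 0.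
          assert (Ht' : av i t k = true) by (destruct (av i t k) eqn:E; auto; exfalso; eapply Hl0; eauto).
          destruct (Ct t Ht' ltac:(lia)) as [A _].
          assert (Hlt : t <? T = true) by (apply Nat.ltb_lt; lia). rewrite Hlt in A. exact A. }
      apply (Hfin _ _ Hm). apply (Cf t0 Ht0). }
  destruct (Hev i T) as [K0 HK0].
  destruct (least_ex (fun k => av i T k = true) K0 HK0) as [K [HK HlK]].
  exists K. split.
  - specialize (Hout K). rewrite HK in Hout. exact Hout.
  - intros k Hk. specialize (Hout k). destruct (av i T k) eqn:E; [exfalso; eapply HlK; eauto|exact Hout].
Qed.
End Outer.

Definition sumf (B : nat -> nat) k s := fold_right (fun m acc => B m + acc) 0 (seq k s).

Lemma sumf_zero B k s : sumf B k s = 0 <-> forall m, k <= m < k + s -> B m = 0.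
Proof.
  revert k; induction s; intros k; cbn; split; intros H.
  - intros; lia.
  - reflexivity.
  - intros m Hm. assert (B k = 0 /\ sumf B (S k) s = 0) as [H1 H2] by (unfold sumf in *; lia).
    destruct (Nat.eq_dec m k); [subst; auto|]. apply (IHs (S k)); auto; lia.
  - rewrite (H k) by lia. cbn. apply (IHs (S k)). intros m Hm. apply H. lia.
Qed.

Section Gen.
Variable h : prf.
(* input x = to_nat (i, to_nat (t, c)) ; a = to_nat (i, c) *)
Definition g_a : Prog := Ppair Pfst (Pcomp Psnd Psnd).
Definition g_t : Prog := Pcomp Pfst Psnd.
Definition g_in : Prog := Ppair (Ppair g_a g_t) g_t.
(* PRec param a' = to_nat (a, t); init: to_nat (t, 0) *)
Definition g_init : Prog := Ppair Psnd Pzero.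
(* g receives to_nat (a', to_nat (n, st)), st = to_nat (idx, acc) *)
Definition g_hin : Prog := Ppair (Pcomp Pfst Pfst) (Ppred (Pcomp Pfst (Pcomp Psnd Psnd))).
(* glue receives to_nat (to_nat (a', to_nat (n, st)), hv) *)
Definition g_glue : Prog :=
  let st := Pcomp Psnd (Pcomp Psnd Pfst) in
  let hv := Psnd in
  Ppair (Ppred (Pcomp Pfst st))
        (Ppair (Padd (Pcomp Pfst hv) (Pcomp Pfst (Pcomp Psnd st)))
               (Psucc_of (Ppair (Pcomp Psnd hv) (Pcomp Psnd (Pcomp Psnd st))))).
Definition g_step : prf := PComp (code g_glue) (PPair PId (PComp h (code g_hin))).
Definition g_fin : Prog :=
  Pcomp (Pifz (Psucc_of Psnd) Pzero Pfst) Psnd.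
Definition Pgen : prf := PComp (code g_fin) (PComp (PRec (code g_init) g_step) (code g_in)).

Lemma ev_in e x x' y : eval e x' y -> x = x' -> eval e x y.
Proof. intros H ->; exact H. Qed.

Lemma Pgen_ok i t c (B E : nat -> nat) :
  (forall m, m < t -> eval h (to_nat (to_nat (i, c), m)) (to_nat (B m, E m))) ->
  eval Pgen (to_nat (i, to_nat (t, c)))
    (if sumf B 0 t =? 0 then S (lcode (map E (seq 0 t))) else 0).
Proof.
  intros Hh. unfold Pgen.
  set (ys := fun s => to_nat (t - s, to_nat (sumf B (t - s) s, lcode (map E (seq (t - s) s))))).
  eapply ev_eq; [econstructor; [econstructor; [apply ok|]|apply ok]|].
  - eapply ev_in; [apply (ev_rec _ _ (to_nat (to_nat (i, c), t)) t ys)|].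
    + eapply ev_eq; [apply ok|]. unfold ys. cbn [fn g_init Ppair Psnd Pzero]. simpof.
      rewrite Nat.sub_0_r. reflexivity.
    + intros s Hs. unfold g_step.
      assert (Hin : fn g_hin (to_nat (to_nat (to_nat (i, c), t), to_nat (s, ys s))) = to_nat (to_nat (i, c), t - S s)).
      { unfold ys. cbn [fn g_hin Ppair Pcomp Pfst Psnd Ppred]. simpof. f_equal. f_equal. lia. }
      eapply ev_eq; [econstructor; [constructor; [constructor|econstructor; [apply ok|rewrite Hin; apply Hh; lia]]|apply ok]|].
      cbn [fn g_glue Ppair Pcomp Pfst Psnd Ppred Padd Psucc_of]. unfold ys. simpof.
      replace (Nat.pred (t - s)) with (t - S s) by lia.
      replace (t - s) with (S (t - S s)) by lia. reflexivity.
    + cbn [fn g_in Ppair g_a g_t Pcomp Pfst Psnd]. simpof. reflexivity.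
  - unfold ys. cbn [fn g_fin Ppair Pcomp Pfst Psnd Pifz Pzero Psucc_of]. simpof.
    rewrite Nat.sub_diag. unfold sumf. destruct (fold_right _ _ _); reflexivity.
Qed.
End Gen.

Lemma computes_ext e p f g : computes e p f -> (forall n, f n = g n) -> computes e p g.
Proof. intros H E n. rewrite <- E. apply H. Qed.

Lemma Pgen_ok2 h i t c (B E : nat -> nat) :
  (forall m, m < t -> exists v, eval h (to_nat (to_nat (i, c), m)) (to_nat (B m, v)) /\ (B m = 0 -> v = E m)) ->
  eval (Pgen h) (to_nat (i, to_nat (t, c)))
    (if sumf B 0 t =? 0 then S (lcode (map E (seq 0 t))) else 0).
Proof.
  intros H.
  assert (H' : forall m, exists v, m < t -> eval h (to_nat (to_nat (i, c), m)) (to_nat (B m, v)) /\ (B m = 0 -> v = E m)).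
  { intros m. destruct (classic (m < t)) as [Hm|Hm].
    - destruct (H m Hm) as [v Hv]. exists v. auto.
    - exists 0. intros; contradiction. }
  destruct (functional_choice _ H') as [f Hf].
  pose proof (Pgen_ok h i t c B f (fun m Hm => proj1 (Hf m Hm))) as R.
  destruct (sumf B 0 t =? 0) eqn:Es; [|exact R].
  apply Nat.eqb_eq in Es. rewrite sumf_zero in Es.
  erewrite map_ext_in; [exact R|]. intros m Hm. apply in_seq in Hm.
  symmetry. apply (proj2 (Hf m ltac:(lia))). apply Es. lia.
Qed.

Definition Pidm : Prog :=
  Pifz Pzero (Psucc_of (Pcomp Pnth (Ppair Psnd Pfst))) (Pcomp Pdrop (Ppair Psnd Pfst)).

Lemma idm_ok q : computes (code Pidm) q q.
Proof.
  intro n. exists (S n). split.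
  - eapply ev_eq; [apply ok|]. cbn [fn Pidm Pifz Pzero Psucc_of Pcomp Ppair Psnd Pfst Pnth Pdrop Pext].
    simpof. destruct (dropc n (lcode (prefix q (S n)))) eqn:E.
    + exfalso. apply (dropc_lcode_nz n (prefix q (S n))) in E; auto. rewrite prefix_length. lia.
    + cbn [ifz]. rewrite nthc_lcode, prefix_nth by lia. reflexivity.
  - intros j Hj. eapply ev_eq; [apply ok|]. cbn [fn Pidm Pifz Pzero Psucc_of Pcomp Ppair Psnd Pfst Pnth Pdrop Pext].
    simpof. destruct (dropc n (lcode (prefix q j))) eqn:E; [reflexivity|].
    exfalso. assert (dropc n (lcode (prefix q j)) <> 0) by congruence.
    apply dropc_lcode_nz in H. rewrite prefix_length in H. lia.
Qed.

(** Look: kappa input to_nat (i, m), output to_nat (tag, val) *)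
Section Look.
Variable kappa : Prog.
Definition kv (i m : nat) := of_nat (fn kappa (to_nat (i, m))).
(* input to_nat (to_nat (i, c), m) *)
Definition L_k : Prog := Pcomp kappa (Ppair (Pcomp Pfst Pfst) Psnd).
Definition L_c : Prog := Pcomp Psnd Pfst.
Definition L_tag : Prog := Pcomp Pfst L_k.
Definition L_val : Prog := Pcomp Psnd L_k.
Definition L_h : Prog :=
  Ppair (Pifz Pzero (Pifz (Pconst 1) Pzero (Pcomp Pdrop (Ppair L_c L_val))) L_tag)
        (Pifz L_val (Pcomp Pnth (Ppair L_c L_val)) L_tag).
Definition Plook : prf := Pgen (code L_h).

Variable p : Baire.
Definition LX (i m : nat) := let (tag, val) := kv i m in if tag =? 0 then val else p val.
Definition Lbad (i k m : nat) := let (tag, val) := kv i m in if tag =? 0 then 0 else if val <? k then 0 else 1.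
Definition Lav (i t k : nat) := sumf (Lbad i k) 0 t =? 0.

Lemma Look_HP i t k : eval Plook (to_nat (i, to_nat (t, lcode (prefix p k))))
   (if Lav i t k then S (lcode (prefix (LX i) t)) else 0).
Proof.
  unfold Plook, Lav. eapply ev_eq; [apply (Pgen_ok2 _ _ _ _ (Lbad i k) (LX i))|].
  - intros m Hm. exists (snd (of_nat (fn L_h (to_nat (to_nat (i, lcode (prefix p k)), m))))). split.
    + eapply ev_eq; [apply ok|].
      cbn [fn L_h Ppair Pifz Pzero Pconst Pcomp L_c L_val L_tag L_k Pfst Psnd Pdrop Pnth Pext]. simpof.
      f_equal.
      unfold Lbad, LX. fold (kv i m). destruct (kv i m) as [tag val]. cbn [fst snd].
      destruct tag; cbn [Nat.eqb ifz].
      * reflexivity.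
      * destruct (val <? k) eqn:E; [apply Nat.ltb_lt in E|apply Nat.ltb_ge in E].
        -- destruct (dropc val (lcode (prefix p k))) eqn:E2.
           ++ exfalso. assert (val < length (prefix p k)) by (rewrite prefix_length; auto).
              apply dropc_lcode_nz in H. auto.
           ++ reflexivity.
        -- destruct (dropc val (lcode (prefix p k))) eqn:E2; [reflexivity|].
           exfalso. assert (dropc val (lcode (prefix p k)) <> 0) by congruence.
           apply dropc_lcode_nz in H. rewrite prefix_length in H. lia.
    + intros Hb. cbn [fn L_h Ppair Pifz Pzero Pconst Pcomp L_c L_val L_tag L_k Pfst Psnd Pdrop Pnth Pext]. simpof.
      unfold Lbad, LX in *. fold (kv i m) in *. destruct (kv i m) as [tag val]. cbn [fst snd].
      destruct tag; cbn [Nat.eqb ifz] in *; [reflexivity|].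
      destruct (val <? k) eqn:E; [apply Nat.ltb_lt in E|discriminate].
      rewrite nthc_lcode, prefix_nth by auto. reflexivity.
  - destruct (sumf (Lbad i k) 0 t =? 0); reflexivity.
Qed.

Lemma sumf_mono B t t' : t' <= t -> sumf B 0 t = 0 -> sumf B 0 t' = 0.
Proof. intros H. rewrite !sumf_zero. intros Z m Hm. apply Z. lia. Qed.

Lemma Look_mono i t t' k : Lav i t k = true -> t' <= t -> Lav i t' k = true.
Proof. unfold Lav. rewrite !Nat.eqb_eq. intros; eapply sumf_mono; eauto. Qed.

Lemma Look_ev i t : exists k, Lav i t k = true.
Proof.
  induction t as [|t [k Hk]].
  - exists 0. reflexivity.
  - exists (k + S (snd (kv i t))). unfold Lav in *. apply Nat.eqb_eq. apply Nat.eqb_eq in Hk.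
    rewrite sumf_zero in *. intros m Hm. unfold Lbad.
    assert (m < t \/ m = t) by lia. destruct H as [Hl|Hl]; [|subst m].
    + specialize (Hk m ltac:(lia)). unfold Lbad in Hk. destruct (kv i m) as [tag val].
      destruct (tag =? 0); auto. destruct (val <? k) eqn:E; [|discriminate].
      apply Nat.ltb_lt in E. replace (val <? k + S (snd (kv i t))) with true; auto.
      symmetry; apply Nat.ltb_lt. lia.
    + destruct (kv i t) as [tag val]. cbn [snd]. destruct (tag =? 0); auto.
      replace (val <? k + S val) with true; auto. symmetry; apply Nat.ltb_lt. lia.
Qed.
End Look.

Lemma LookOuter_ok e2 kappa Sg p (R : nat -> Baire) :
  (forall i, computes e2 (LX kappa p i) (R i)) ->
  computes (Outer e2 (Plook kappa) Sg) p (fun m => let (i, j) := of_nat (fn Sg m) in R i j).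
Proof.
  intros Hc. apply (Outer_ok e2 (Plook kappa) Sg p (LX kappa p) R (Lav kappa)).
  - apply Look_HP.
  - apply Look_mono.
  - apply Look_ev.
  - exact Hc.
Qed.

Lemma take_build p k j : j <= k ->
  fn (Pbuild Pnth) (to_nat (lcode (prefix p k), j)) = lcode (prefix p j).
Proof.
  intros H. rewrite Pbuild_fn, ofto. unfold build. f_equal. unfold prefix.
  apply map_ext_in. intros m Hm. apply in_seq in Hm.
  cbn [fn Pnth Pext]. rewrite ofto. rewrite nthc_lcode.
  fold (prefix p k). apply prefix_nth. lia.
Qed.

Section Comp.
Variable e1 : prf.
(* y2 = to_nat (y, j), y = to_nat (to_nat (i, c), m) *)
Definition s_c : Prog := Pcomp Psnd (Pcomp Pfst Pfst).
Definition s_j : Prog := Psnd.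
Definition s_avj : Prog := Pifz (Pconst 1) (Pifz Pzero (Pconst 1) (Pcomp Pdrop (Ppair s_c (Ppred s_j)))) s_j.
Definition s_take : Prog := Pcomp (Pbuild Pnth) (Ppair s_c s_j).
Definition SrS1 : Prog := Ppair Pid (Ppair s_avj (Pifz Pzero s_take s_avj)).
(* z = to_nat (y2, to_nat (avj, cj)) *)
Definition E1in : Prog := Ppair (Pcomp Psnd (Pcomp Pfst Pfst)) (Pcomp Psnd Psnd).
Definition sstep : prf := PPair PId (PComp e1 (code E1in)).
(* w = to_nat (z, r) *)
Definition w_avj : Prog := Pcomp Pfst (Pcomp Psnd Pfst).
Definition cond3 : Prog := Pifz Pzero (Pifz (Pconst 1) Pzero Psnd) w_avj.
Definition hfin : Prog := Ppair (Pifz (Pconst 1) Pzero w_avj) (Ppred Psnd).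
Definition cond1 : prf := PComp (code cond3) (PComp sstep (code SrS1)).
Definition hC : prf := PComp (code hfin) (PComp sstep (PComp (code SrS1) (PPair PId (PMu cond1)))).
Definition Pcompm : prf := Pgen hC.

Lemma s_chain y2 r : eval e1 (fn E1in (fn SrS1 y2)) r ->
  forall F : Prog, eval (PComp (code F) (PComp sstep (code SrS1))) y2 (fn F (to_nat (fn SrS1 y2, r))).
Proof.
  intros H F. econstructor; [|apply ok]. econstructor; [apply ok|].
  constructor; [constructor|]. econstructor; [apply ok|exact H].
Qed.

Variable p q : Baire.
Variable Kf : nat -> nat.
Hypothesis HK1 : forall m, eval e1 (to_nat (m, lcode (prefix p (Kf m)))) (S (q m)).
Hypothesis HK2 : forall m j, j < Kf m -> eval e1 (to_nat (m, lcode (prefix p j))) 0.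

Section Fix.
Variables i k m : nat.
Let y := to_nat (to_nat (i, lcode (prefix p k)), m).

Lemma S1_E1 j : fn E1in (fn SrS1 (to_nat (y, j))) = to_nat (m, if j <=? k then lcode (prefix p j) else 0).
Proof.
  unfold y. cbn [fn E1in SrS1 Ppair Pcomp Pfst Psnd Pid Pifz s_avj s_take s_c s_j Pconst Pzero Ppred]. simpof.
  destruct (j <=? k) eqn:E; [apply Nat.leb_le in E|apply Nat.leb_gt in E].
  - destruct j as [|j]; cbn [ifz Nat.pred].
    + rewrite take_build by lia. reflexivity.
    + cbn [fn Pdrop Pext]. rewrite ofto.
      destruct (dropc j (lcode (prefix p k))) eqn:E2.
      * exfalso. assert (j < length (prefix p k)) by (rewrite prefix_length; lia).
        apply dropc_lcode_nz in H. auto.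
      * cbn [ifz]. rewrite take_build by lia. reflexivity.
  - destruct j as [|j]; [lia|]. cbn [ifz Nat.pred]. cbn [fn Pdrop Pext]. rewrite ofto.
    destruct (dropc j (lcode (prefix p k))) eqn:E2; [reflexivity|].
    exfalso. assert (dropc j (lcode (prefix p k)) <> 0) by congruence.
    apply dropc_lcode_nz in H. rewrite prefix_length in H. lia.
Qed.

Lemma S1_avj j : fn w_avj (to_nat (fn SrS1 (to_nat (y, j)), 0)) = if j <=? k then 1 else 0.
Proof.
  unfold y. cbn [fn w_avj SrS1 Ppair Pcomp Pfst Psnd Pid Pifz s_avj s_c s_j Pconst Pzero Ppred]. simpof.
  destruct (j <=? k) eqn:E; [apply Nat.leb_le in E|apply Nat.leb_gt in E].
  - destruct j as [|j]; cbn [ifz Nat.pred]; [reflexivity|].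
    cbn [fn Pdrop Pext]. rewrite ofto.
    destruct (dropc j (lcode (prefix p k))) eqn:E2; [|reflexivity].
    exfalso. assert (j < length (prefix p k)) by (rewrite prefix_length; lia).
    apply dropc_lcode_nz in H. auto.
  - destruct j as [|j]; [lia|]. cbn [ifz Nat.pred]. cbn [fn Pdrop Pext]. rewrite ofto.
    destruct (dropc j (lcode (prefix p k))) eqn:E2; [reflexivity|].
    exfalso. assert (dropc j (lcode (prefix p k)) <> 0) by congruence.
    apply dropc_lcode_nz in H. rewrite prefix_length in H. lia.
Qed.

Lemma w_avj_r s r : fn w_avj (to_nat (s, r)) = fn w_avj (to_nat (s, 0)).
Proof. cbn [fn w_avj Pcomp Pfst Psnd]. simpof. reflexivity. Qed.

Lemma cond3_val j r : fn cond3 (to_nat (fn SrS1 (to_nat (y, j)), r)) =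
  if j <=? k then ifz 1 0 r else 0.
Proof.
  replace (fn cond3 (to_nat (fn SrS1 (to_nat (y, j)), r))) with
    (ifz 0 (ifz 1 0 r) (fn w_avj (to_nat (fn SrS1 (to_nat (y, j)), r)))).
  - rewrite w_avj_r, S1_avj. destruct (j <=? k); reflexivity.
  - cbn [fn cond3 Pifz Pzero Pconst Psnd]. simpof. reflexivity.
Qed.

Lemma hfin_val j r : fn hfin (to_nat (fn SrS1 (to_nat (y, j)), r)) =
  to_nat (if j <=? k then 0 else 1, Nat.pred r).
Proof.
  replace (fn hfin (to_nat (fn SrS1 (to_nat (y, j)), r))) with
    (to_nat (ifz 1 0 (fn w_avj (to_nat (fn SrS1 (to_nat (y, j)), r))), Nat.pred r)).
  - rewrite w_avj_r, S1_avj. destruct (j <=? k); reflexivity.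
  - cbn [fn hfin Pifz Pzero Pconst Psnd Ppair Ppred]. simpof. reflexivity.
Qed.

Lemma hC_ok : exists v, eval hC y (to_nat (if Kf m <=? k then 0 else 1, v)) /\
   (Kf m <= k -> v = q m).
Proof.
  assert (Hfin : forall n v, eval (PMu cond1) y n ->
       eval (PComp (code hfin) (PComp sstep (code SrS1))) (to_nat (y, n)) v -> eval hC y v).
  { intros n v Hm Hf. inversion Hf as [| | | | | |f g x0 y0 z Hy Hz| | |]; subst.
    inversion Hy as [| | | | | |f' g' x1 y1 z1 Hy1 Hz1| | |]; subst.
    unfold hC. econstructor; [|exact Hz]. econstructor; [|exact Hz1].
    econstructor; [|exact Hy1]. eapply ev_eq; [constructor; [constructor|exact Hm]|]. reflexivity. }
  assert (Hlow : forall j, j < Kf m -> j <= k -> eval cond1 (to_nat (y, j)) 1).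
  { intros j Hj Hjk. eapply ev_eq; [apply s_chain; rewrite S1_E1|].
    - replace (j <=? k) with true by (symmetry; apply Nat.leb_le; auto). apply HK2. auto.
    - rewrite cond3_val. replace (j <=? k) with true by (symmetry; apply Nat.leb_le; auto). reflexivity. }
  destruct (Kf m <=? k) eqn:EK; [apply Nat.leb_le in EK|apply Nat.leb_gt in EK].
  - exists (q m). split; auto.
    assert (HT : eval e1 (fn E1in (fn SrS1 (to_nat (y, Kf m)))) (S (q m))).
    { rewrite S1_E1. replace (Kf m <=? k) with true by (symmetry; apply Nat.leb_le; auto). apply HK1. }
    apply (Hfin (Kf m)).
    + constructor.
      * eapply ev_eq; [apply (s_chain _ _ HT)|]. rewrite cond3_val.
        replace (Kf m <=? k) with true by (symmetry; apply Nat.leb_le; auto). reflexivity.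
      * intros j Hj. exists 0. apply Hlow; lia.
    + eapply ev_eq; [apply (s_chain _ _ HT)|]. rewrite hfin_val.
      replace (Kf m <=? k) with true by (symmetry; apply Nat.leb_le; auto). reflexivity.
  - assert (E0 : exists w0, eval e1 (to_nat (m, 0)) w0).
    { destruct (Kf m) as [|K] eqn:EKm; [lia|]. exists 0. apply (HK2 m 0). lia. }
    destruct E0 as [w0 Hw0].
    exists (Nat.pred w0). split; [|lia].
    assert (HT : eval e1 (fn E1in (fn SrS1 (to_nat (y, S k)))) w0).
    { rewrite S1_E1. replace (S k <=? k) with false by (symmetry; apply Nat.leb_gt; auto). exact Hw0. }
    apply (Hfin (S k)).
    + constructor.
      * eapply ev_eq; [apply (s_chain _ _ HT)|]. rewrite cond3_val.
        replace (S k <=? k) with false by (symmetry; apply Nat.leb_gt; auto). reflexivity.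
      * intros j Hj. exists 0. apply Hlow; lia.
    + eapply ev_eq; [apply (s_chain _ _ HT)|]. rewrite hfin_val.
      replace (S k <=? k) with false by (symmetry; apply Nat.leb_gt; auto). reflexivity.
Qed.
End Fix.

Definition Cav (i t k : nat) := sumf (fun m => if Kf m <=? k then 0 else 1) 0 t =? 0.

Lemma Comp_HP i t k : eval Pcompm (to_nat (i, to_nat (t, lcode (prefix p k))))
   (if Cav i t k then S (lcode (prefix q t)) else 0).
Proof.
  unfold Pcompm, Cav. eapply ev_eq; [apply (Pgen_ok2 _ _ _ _ (fun m => if Kf m <=? k then 0 else 1) q)|].
  - intros m Hm. destruct (hC_ok i k m) as [v [Hv1 Hv2]]. exists v. split; auto.
    intros H. apply Hv2. destruct (Kf m <=? k) eqn:E; [apply Nat.leb_le; auto|discriminate].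
  - reflexivity.
Qed.

Lemma Comp_mono i t t' k : Cav i t k = true -> t' <= t -> Cav i t' k = true.
Proof. unfold Cav. rewrite !Nat.eqb_eq. intros; eapply sumf_mono; eauto. Qed.

Lemma Comp_ev i t : exists k, Cav i t k = true.
Proof.
  induction t as [|t [k Hk]].
  - exists 0. reflexivity.
  - exists (k + Kf t). unfold Cav in *. apply Nat.eqb_eq. apply Nat.eqb_eq in Hk.
    rewrite sumf_zero in *. intros m Hm.
    assert (m < t \/ m = t) by lia. destruct H as [Hl|Hl]; [|subst m].
    + specialize (Hk m ltac:(lia)). cbn beta in Hk. destruct (Kf m <=? k) eqn:E; [|discriminate].
      apply Nat.leb_le in E. replace (Kf m <=? k + Kf t) with true; auto. symmetry; apply Nat.leb_le. lia.
    + replace (Kf t <=? k + Kf t) with true; auto. symmetry; apply Nat.leb_le. lia.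
Qed.
End Comp.

Lemma computes_K e p q : computes e p q -> exists Kf : nat -> nat,
  (forall m, eval e (to_nat (m, lcode (prefix p (Kf m)))) (S (q m))) /\
  (forall m j, j < Kf m -> eval e (to_nat (m, lcode (prefix p j))) 0).
Proof.
  intros H. destruct (functional_choice _ H) as [Kf HKf]. exists Kf. split; intros; apply HKf; auto.
Qed.

Definition Sg0 : Prog := Ppair Pzero Pid.
Definition Compm (e1 e2 : prf) : prf := Outer e2 (Pcompm e1) Sg0.

Lemma Compm_ok e1 e2 p q r : computes e1 p q -> computes e2 q r -> computes (Compm e1 e2) p r.
Proof.
  intros H1 H2. destruct (computes_K _ _ _ H1) as [Kf [HK1 HK2]].
  eapply computes_ext.
  - apply (Outer_ok e2 (Pcompm e1) Sg0 p (fun _ => q) (fun _ => r) (Cav Kf)).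
    + apply Comp_HP; auto.
    + apply Comp_mono.
    + apply Comp_ev.
    + intros; exact H2.
  - intros n. cbn [fn Sg0 Ppair Pzero Pid]. rewrite ofto. reflexivity.
Qed.

Section Disp.
Variable ea eb : prf.
(* input x = to_nat (n, c) *)
Definition d_i : Prog := Pcomp Pfst Pfst.
Definition d_j : Prog := Pcomp Psnd Pfst.
Definition d_c : Prog := Psnd.
Definition d_in : Prog :=
  Ppair (Ppair (Ppair d_j (Pifz d_c Pzero d_i)) (Ppair d_j d_c)) d_i.
Definition Disp : prf := PComp (PRec (PComp ea PFst) (PComp eb (PComp PSnd PFst))) (code d_in).

Lemma ev_term e p q n : computes e p q -> exists w, eval e (to_nat (n, 0)) w.
Proof.
  intros H. destruct (H n) as [[|K] [A B]].
  - eexists; exact A.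
  - exists 0. apply (B 0). lia.
Qed.

Variable p Ya Yb : Baire.
Hypothesis Ha : computes ea p Ya.
Hypothesis Hb : computes eb p Yb.

Lemma Disp_ok : computes Disp p (fun n => let (i, j) := of_nat n in if i =? 0 then Ya j else Yb j).
Proof.
  intro n. destruct (of_nat n) as [i j] eqn:Eij.
  assert (Hin : forall c, fn d_in (to_nat (n, c)) = to_nat (to_nat (to_nat (j, ifz c 0 i), to_nat (j, c)), i)).
  { intros c. cbn [fn d_in Ppair d_i d_j d_c Pcomp Pfst Psnd Pifz Pzero]. simpof. rewrite Eij. reflexivity. }
  destruct i as [|i].
  - cbn [Nat.eqb]. destruct (Ha j) as [K [A B]]. exists K. split.
    + econstructor; [apply ok|]. rewrite Hin. cbn [ifz].
      apply (ev_rec _ _ _ 0 (fun _ => S (Ya j))). econstructor; [apply ev_fst|exact A]. intros; lia.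
    + intros k Hk. econstructor; [apply ok|]. rewrite Hin. cbn [ifz].
      apply (ev_rec _ _ _ 0 (fun _ => 0)). econstructor; [apply ev_fst|apply B; auto]. intros; lia.
  - cbn [Nat.eqb]. destruct (ev_term _ _ _ j Ha) as [w0 Hw0].
    destruct (Hb j) as [K [A B]].
    assert (G : forall k v, eval eb (to_nat (j, lcode (prefix p k))) v ->
       eval Disp (to_nat (n, lcode (prefix p k))) v).
    { intros k v Hv. econstructor; [apply ok|]. rewrite Hin. cbn [ifz].
      apply (ev_rec _ _ _ (S i) (fun m => match m with 0 => w0 | _ => v end)).
      - econstructor; [apply ev_fst|exact Hw0].
      - intros m _. econstructor; [|exact Hv]. econstructor; [apply ev_fst|apply ev_snd]. }
    exists K. split; [apply G; exact A|]. intros k Hk. apply G. apply B. auto.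
Qed.
End Disp.

Ltac pfn := cbn [fn code Pcomp Ppair Pfst Psnd Pid Pzero Pconst Pifz Padd Psub Ppred Psucc_of Pext Piter]; simpof.

Definition Pif (c a b : Prog) := Pifz b a c.
Lemma Pif_fn c a b x : fn (Pif c a b) x = if fn c x =? 0 then fn b x else fn a x.
Proof. unfold Pif. cbn [fn Pifz]. destruct (fn c x); reflexivity. Qed.

Definition Pmapm (F : Prog) : Prog :=
  Pifz Pzero (Psucc_of (Pcomp F (Pcomp Pnth (Ppair Psnd Pfst)))) (Pcomp Pdrop (Ppair Psnd Pfst)).

Lemma mapm_ok F q : computes (code (Pmapm F)) q (fun n => fn F (q n)).
Proof.
  intro n. exists (S n). split.
  - eapply ev_eq; [apply ok|]. cbn [fn Pmapm Pifz Pzero Psucc_of Pcomp Ppair Psnd Pfst Pnth Pdrop Pext].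
    simpof. destruct (dropc n (lcode (prefix q (S n)))) eqn:E.
    + exfalso. apply (dropc_lcode_nz n (prefix q (S n))) in E; auto. rewrite prefix_length. lia.
    + cbn [ifz]. rewrite nthc_lcode, prefix_nth by lia. reflexivity.
  - intros j Hj. eapply ev_eq; [apply ok|]. cbn [fn Pmapm Pifz Pzero Psucc_of Pcomp Ppair Psnd Pfst Pnth Pdrop Pext].
    simpof. destruct (dropc n (lcode (prefix q j))) eqn:E; [reflexivity|].
    exfalso. assert (dropc n (lcode (prefix q j)) <> 0) by congruence.
    apply dropc_lcode_nz in H. rewrite prefix_length in H. lia.
Qed.

Definition ph_step : Prog :=
  let s := Psnd in
  Pifz (Ppair (Pconst 1) (Pcomp Psnd s)) (Ppair Pzero (Psucc_of (Pcomp Psnd s))) (Pcomp Pfst s).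
Definition Pph0 : Prog := Pcomp (Piter Pzero ph_step) (Ppair Pzero Pid).

Lemma ph_iter m : Nat.iter m (fun s => fn ph_step (to_nat (0, s))) 0 =
   to_nat (if Nat.even m then 0 else 1, Nat.div2 m).
Proof.
  assert (K : forall m, Nat.iter m (fun s => fn ph_step (to_nat (0, s))) 0 = to_nat (m mod 2, m / 2)).
  { clear m. intro m. induction m as [|m IH]; [reflexivity|].
    rewrite Nat.iter_succ, IH. unfold ph_step. pfn.
    pose proof (Nat.mod_upper_bound m 2 ltac:(lia)). pose proof (Nat.div_mod_eq m 2).
    assert (DU : forall m q r, r < 2 -> m = 2 * q + r -> m / 2 = q /\ m mod 2 = r).
    { intros m' q r Hr Hm. split; [symmetry; eapply Nat.div_unique|symmetry; eapply Nat.mod_unique]; eauto. }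
    destruct (m mod 2) as [|[|r]] eqn:E; cbn [ifz]; [| |lia].
    - destruct (DU (S m) (m / 2) 1) as [-> ->]; auto; lia.
    - destruct (DU (S m) (S (m / 2)) 0) as [-> ->]; auto; lia. }
  rewrite K. rewrite Nat.div2_div.
  replace (m mod 2) with (if Nat.even m then 0 else 1); [reflexivity|].
  destruct (Nat.even m) eqn:E.
  + apply Nat.even_spec in E. destruct E as [k ->]. rewrite Nat.mul_comm, Nat.Div0.mod_mul. reflexivity.
  + assert (Nat.odd m = true) by (rewrite <- Nat.negb_even, E; reflexivity).
    apply Nat.odd_spec in H. destruct H as [k ->]. eapply Nat.mod_unique with (q := k); lia.
Qed.

Definition Pph : Prog := Pext Pph0 (fun x => to_nat (if Nat.even x then 0 else 1, Nat.div2 x))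
  (fun x => ltac:(unfold Pph0; cbn [fn Pcomp Piter Ppair Pzero Pid]; unfold iterf; rewrite ofto; apply ph_iter)).

Lemma computes_in_ext e p p' q : (forall m, p m = p' m) -> computes e p q -> computes e p' q.
Proof.
  intros E H n. destruct (H n) as [k [A B]]. exists k.
  rewrite <- (prefix_ext p p' k) by auto. split; auto.
  intros j Hj. rewrite <- (prefix_ext p p' j) by auto. auto.
Qed.

Lemma LX_eq kappa p i m tag val : fn kappa (to_nat (i, m)) = to_nat (tag, val) ->
  LX kappa p i m = if tag =? 0 then val else p val.
Proof. intros E. unfold LX, kv. rewrite E, ofto. reflexivity. Qed.

Definition k_par : Prog := Pcomp Pfst (Pcomp Pph Psnd).
Definition k_d : Prog := Pcomp Psnd (Pcomp Pph Psnd).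

Lemma k_par_fn n m : fn k_par (to_nat (n, m)) = if Nat.even m then 0 else 1.
Proof. unfold k_par. cbn [fn Pcomp Pfst Psnd Pph Pext]. simpof. reflexivity. Qed.
Lemma k_d_fn n m : fn k_d (to_nat (n, m)) = Nat.div2 m.
Proof. unfold k_d. cbn [fn Pcomp Pfst Psnd Pph Pext]. simpof. reflexivity. Qed.

(* EF : i = 0 -> constant 1 (empty tree), else constant 0 (full tree) *)
Definition kEF : Prog := Ppair Pzero (Pif Pfst Pzero (Pconst 1)).
Lemma LX_EF p i m : LX kEF p i m = if i =? 0 then 1 else 0.
Proof.
  unfold LX, kv, kEF. cbn [fn Ppair Pzero Pconst]. rewrite Pif_fn.
  cbn [fn Pfst Pzero Pconst]. simpof. destruct i; reflexivity.
Qed.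

Definition kR (c1 : nat) : Prog :=
  Pif k_par (Ppair (Pconst 1) (Ppair Pfst (Ppair (Pconst 1) k_d))) (Ppair Pzero (Pconst c1)).
Lemma LX_R c1 p n m : LX (kR c1) p n m = pairB (cst c1) (projB 1 (projB n p)) m.
Proof.
  unfold LX, kv, kR, pairB, projB, cst. rewrite Pif_fn, k_par_fn.
  destruct (Nat.even m); cbn [Nat.eqb fn Ppair Pzero Pconst Pfst]; rewrite ?k_d_fn; simpof; reflexivity.
Qed.

Definition kF0 (c0 : nat) : Prog :=
  Pif k_par (Ppair (Pconst 1) (Ppair (Pconst 1) k_d)) (Ppair Pzero (Pconst c0)).
Lemma LX_F0 c0 Y i m : LX (kF0 c0) Y i m = pairB (cst c0) (fun j => Y (to_nat (1, j))) m.
Proof.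
  unfold LX, kv, kF0, pairB, cst. rewrite Pif_fn, k_par_fn.
  destruct (Nat.even m); cbn [Nat.eqb fn Ppair Pzero Pconst Pfst]; rewrite ?k_d_fn; simpof; reflexivity.
Qed.

Definition kU : Prog :=
  Pif k_par (Ppair (Pconst 1) (Ppair (Pconst 1) (Ppair Pfst k_d))) (Ppair (Pconst 1) (Ppair Pzero k_d)).
Lemma LX_U T n m : LX kU T n m = pairB (fun j => T (to_nat (0, j))) (fun j => T (to_nat (1, to_nat (n, j)))) m.
Proof.
  unfold LX, kv, kU, pairB. rewrite Pif_fn, k_par_fn.
  destruct (Nat.even m); cbn [Nat.eqb fn Ppair Pzero Pconst Pfst]; rewrite ?k_d_fn; simpof; reflexivity.
Qed.

Fixpoint tab (v : nat) (l : list (nat * nat)) (d : nat) : nat :=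
  match l with [] => d | (k, r) :: l' => if v =? k then r else tab v l' d end.
Fixpoint Ptab (x : Prog) (l : list (nat * nat)) (d : nat) : Prog :=
  match l with [] => Pconst d | (k, r) :: l' => Pif (Peqb x (Pconst k)) (Pconst r) (Ptab x l' d) end.
Lemma Ptab_fn x l d y : fn (Ptab x l d) y = tab (fn x y) l d.
Proof.
  induction l as [|[k r] l IH]; [reflexivity|]. cbn [Ptab tab]. rewrite Pif_fn, Peqb_fn, IH.
  cbn [fn Pconst]. destruct (fn x y =? k); reflexivity.
Qed.

Lemma Pltb_fn' p q x : fn (Pltb p q) x = Nat.b2n (fn p x <? fn q x).
Proof. rewrite Pltb_fn. destruct (_ <? _); reflexivity. Qed.

Fixpoint tf (ds : nat -> list bool -> player) (n : nat) (w : list bool) : player :=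
  match w with
  | false :: w' => tf ds (S n) w'
  | true :: true :: w' => ds n w'
  | _ => P1
  end.

Lemma tf_zeros ds n z w : tf ds n (repeat false z ++ w) = tf ds (n + z) w.
Proof. revert n; induction z; intros n; cbn; [rewrite Nat.add_0_r; auto|]. rewrite IHz. f_equal. lia. Qed.

Lemma decomp_w (w : list bool) : exists z w1, w = repeat false z ++ w1 /\ (w1 = [] \/ exists w2, w1 = true :: w2).
Proof.
  induction w as [|b w IH].
  - exists 0, []. auto.
  - destruct IH as [z [w1 [E H]]]. destruct b.
    + exists 0, (true :: w). eauto.
    + exists (S z), w1. rewrite E. auto.
Qed.

(* leading zero scan: state to_nat (n, cur) *)
Definition lz_step : Prog :=
  let st := Psnd in
  let n := Pcomp Pfst st in
  let cur := Pcomp Psnd st in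
  Pif cur (Pif (Pcomp Phdc cur) st (Ppair (Psucc_of n) (Pcomp Ptlc cur))) st.
Definition Plz : Prog := Pcomp (Piter (Ppair Pzero Pid) lz_step) (Ppair Pid Pid).

Lemma lcode_ge l : length l <= lcode l.
Proof.
  induction l; cbn [length lcode]; [lia|]. pose proof (to_nat_non_decreasing a (lcode l)). lia.
Qed.

Lemma iter_fix {A} (f : A -> A) s n : f s = s -> Nat.iter n f s = s.
Proof. intros H; induction n; [reflexivity|]. rewrite Nat.iter_succ, IHn. exact H. Qed.

Lemma lz_fix l n : (l = [] \/ exists x l', l = x :: l' /\ x <> 0) ->
  fn lz_step (to_nat (0, to_nat (n, lcode l))) = to_nat (n, lcode l).
Proof.
  intros Hl. unfold lz_step. rewrite Pif_fn. cbn [fn Pcomp Psnd Pfst]. simpof.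
  destruct Hl as [->|[x [l' [-> Hx]]]]; [reflexivity|].
  change (lcode (x :: l')) with (S (to_nat (x, lcode l'))). cbn [Nat.eqb].
  rewrite Pif_fn. cbn [fn Pcomp Psnd Phdc Pext]. simpof. cbn [hdc]. rewrite ofto.
  destruct x; [lia|]. reflexivity.
Qed.

Lemma lz_iter z l n f : (l = [] \/ exists x l', l = x :: l' /\ x <> 0) -> z <= f ->
  Nat.iter f (fun s => fn lz_step (to_nat (0, s))) (to_nat (n, lcode (repeat 0 z ++ l))) =
  to_nat (n + z, lcode l).
Proof.
  intros Hl. revert z n. induction f; intros z n Hz.
  - assert (z = 0) by lia. subst. rewrite Nat.add_0_r. reflexivity.
  - rewrite Nat.iter_succ_r. destruct z as [|z].
    + cbn [repeat app]. rewrite Nat.add_0_r. rewrite (lz_fix _ _ Hl). apply iter_fix. apply lz_fix; auto.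
    + cbn [repeat app].
      assert (Fx : fn lz_step (to_nat (0, to_nat (n, lcode (0 :: repeat 0 z ++ l)))) =
                   to_nat (S n, lcode (repeat 0 z ++ l))).
      { unfold lz_step. change (lcode (0 :: repeat 0 z ++ l)) with (S (to_nat (0, lcode (repeat 0 z ++ l)))).
        rewrite Pif_fn. cbn [fn Pcomp Psnd Pfst]. simpof. cbn [Nat.eqb].
        rewrite Pif_fn. cbn [fn Pcomp Psnd Pfst Phdc Ptlc Pext Ppair Psucc_of]. simpof. cbn [hdc tlc]. rewrite ofto.
        cbn [Nat.eqb fst snd]. reflexivity. }
      rewrite Fx. rewrite IHf by lia. f_equal. f_equal. lia.
Qed.

Definition dec (v : nat) (g : nat -> nat) := let (tag, val) := of_nat v in if tag =? 0 then val else g val.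

Lemma lz_step_a a s : fn lz_step (to_nat (a, s)) = fn lz_step (to_nat (0, s)).
Proof. unfold lz_step. rewrite !Pif_fn. cbn [fn Pcomp Psnd Pfst Ppair Psucc_of]. simpof.
  reflexivity. Qed.

Definition PB : Prog :=
  let st := Plz in
  let n := Pcomp Pfst st in
  let cur := Pcomp Psnd st in
  let t1 := Pcomp Ptlc cur in
  let ZERO := Ppair Pzero Pzero in
  Pif cur (Pif (Peqb (Pcomp Phdc cur) (Pconst 1))
             (Pif t1 (Pif (Peqb (Pcomp Phdc t1) (Pconst 1))
                 (Ppair (Pconst 1) (Ppair Pzero (Ppair n (Ppair Pzero (Pcomp Ptlc t1))))) ZERO) ZERO) ZERO) ZERO.

Lemma wcode_app_zeros z w : wcode (repeat false z ++ w) = lcode (repeat 0 z ++ map Nat.b2n w).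
Proof. unfold wcode. rewrite map_app, map_repeat. reflexivity. Qed.
Lemma wcode_len w : length w <= wcode w.
Proof. unfold wcode. pose proof (lcode_ge (map Nat.b2n w)). rewrite length_map in H. exact H. Qed.

Lemma PB_spec ds (g : nat -> nat) w :
  (forall n w', g (to_nat (0, to_nat (n, to_nat (0, wcode w')))) = player_code (ds n w')) ->
  dec (fn PB (wcode w)) g = player_code (tf ds 0 w).
Proof.
  intros Hg. destruct (decomp_w w) as [z [w1 [-> Hw1]]].
  rewrite tf_zeros. cbn [Nat.add].
  assert (HL : fn Plz (wcode (repeat false z ++ w1)) = to_nat (z, lcode (map Nat.b2n w1))).
  { unfold Plz. cbn [fn Pcomp Piter Ppair Pzero Pid]. unfold iterf. rewrite ofto.
    rewrite (iter_ext _ (fun s => fn lz_step (to_nat (0, s)))) by (intros; apply lz_step_a).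
    rewrite wcode_app_zeros at 2. rewrite lz_iter; [reflexivity| |].
    - destruct Hw1 as [->|[w2 ->]]; [left; reflexivity|right]. eexists _, _. split; [reflexivity|]. cbn; lia.
    - pose proof (wcode_len (repeat false z ++ w1)). rewrite length_app, repeat_length in H. lia. }
  unfold PB. repeat (first [rewrite Pif_fn | rewrite Peqb_fn]).
  cbn [fn Pcomp Psnd Pfst Pconst Ppair Pzero Phdc Ptlc Pext]. rewrite ?HL. simpof.
  assert (NZ : forall a l, (lcode (a :: l) =? 0) = false) by reflexivity.
  destruct Hw1 as [->|[w2 ->]].
  - change (lcode (map Nat.b2n [])) with 0. cbn [Nat.eqb]. unfold dec. rewrite ofto. reflexivity.
  - cbn [map]. rewrite NZ, hdc_lcode, tlc_lcode. cbn [Nat.b2n Nat.eqb].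
    destruct w2 as [|b w3].
    + change (lcode (map Nat.b2n [])) with 0. cbn [Nat.eqb]. unfold dec. rewrite ofto. reflexivity.
    + cbn [map]. rewrite NZ, hdc_lcode, tlc_lcode.
      destruct b; cbn [Nat.b2n Nat.eqb].
      * unfold dec. simpof. cbn [Nat.eqb tf]. rewrite <- Hg. reflexivity.
      * unfold dec. rewrite ofto. reflexivity.
Qed.

Definition kI : Prog := Pfst.
Definition kJ : Prog := Psnd.
Definition PA : Prog := Ppair Pzero (Ptab kJ [(0,2);(1,3)] 0).
Definition PB' : Prog := Pcomp PB kJ.
Definition PC : Prog :=
  let a := Pcomp Pfst kJ in let o := Pcomp Pfst (Pcomp Psnd kJ) in let o' := Pcomp Psnd (Pcomp Psnd kJ) in
  Ppair Pzero (Pif a (Pltb o' o) (Pltb o o')).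
Definition bit_tab := [(to_nat (1,1),1);(to_nat (1,3),1)].
Definition src_tab := [(to_nat (0,4),2);(to_nat (0,6),3);(to_nat (0,7),1);(to_nat (1,1),3);(to_nat (1,3),2);(to_nat (1,7),1)].
Definition PD : Prog :=
  let t := Pcomp Pfst kJ in let j' := Pcomp Psnd kJ in
  let src := Ptab t src_tab 0 in
  Pif j' (Ppair (Pconst 1) (Ppair (Pconst 1) (Ppair (Pcomp Psnd (Pcomp Pph src))
             (Ppair (Pcomp Pfst (Pcomp Pph src)) (Ppred j')))))
         (Ppair Pzero (Ptab t bit_tab 0)).
Definition kfin' : Prog :=
  Pif (Peqb kI (Pconst 0)) PA (Pif (Peqb kI (Pconst 1)) PB'
   (Pif (Peqb kI (Pconst 2)) PC (Pif (Peqb kI (Pconst 3)) PD (Ppair Pzero Pzero)))).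
Definition kfin : Prog := Pcomp kfin' Psnd.

Lemma LX_fin Z i m : LX kfin Z i m = dec (fn kfin' m) Z.
Proof. unfold LX, kv, dec, kfin. cbn [fn Pcomp Psnd]. rewrite ofto. reflexivity. Qed.

Ltac kf := unfold kfin'; rewrite ?Pif_fn, ?Peqb_fn; cbn [fn kI kJ Pconst Pfst Psnd]; simpof; cbn [Nat.eqb].

Lemma fin_A Z j : dec (fn kfin' (to_nat (0, j))) Z = if j =? 0 then 2 else if j =? 1 then 3 else 0.
Proof.
  kf. unfold PA. cbn [fn Ppair Pzero]. rewrite Ptab_fn. cbn [fn kJ Psnd]. unfold dec. simpof.
  cbn [Nat.eqb]. destruct j as [|[|j]]; reflexivity.
Qed.

Lemma fin_B Z ds w :
  (forall n w', Z (to_nat (0, to_nat (n, to_nat (0, wcode w')))) = player_code (ds n w')) ->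
  dec (fn kfin' (to_nat (1, wcode w))) Z = player_code (tf ds 0 w).
Proof.
  intros H. kf. unfold PB'. cbn [fn Pcomp kJ Psnd]. rewrite ofto. cbn [snd]. apply PB_spec. exact H.
Qed.

Lemma fin_C Z a o o' : dec (fn kfin' (to_nat (2, to_nat (a, to_nat (o, o'))))) Z =
  if a =? 0 then Nat.b2n (o <? o') else Nat.b2n (o' <? o).
Proof.
  kf. unfold PC. cbn [fn Ppair Pzero]. rewrite Pif_fn, !Pltb_fn'. cbn [fn Pcomp kJ Psnd Pfst]. simpof.
  unfold dec. simpof. cbn [Nat.eqb]. destruct a; reflexivity.
Qed.

Lemma fin_D0 Z t : dec (fn kfin' (to_nat (3, to_nat (t, 0)))) Z = tab t bit_tab 0.
Proof.
  kf. unfold PD. rewrite Pif_fn. cbn [fn Pcomp kJ Psnd Pfst]. simpof. cbn [Nat.eqb].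
  cbn [fn Ppair Pzero]. rewrite Ptab_fn. cbn [fn Pcomp kJ Psnd Pfst]. simpof. unfold dec. simpof. reflexivity.
Qed.

Lemma fin_DS Z t y : dec (fn kfin' (to_nat (3, to_nat (t, S y)))) Z =
  let s := tab t src_tab 0 in Z (to_nat (1, to_nat (Nat.div2 s, to_nat (if Nat.even s then 0 else 1, y)))).
Proof.
  kf. unfold PD. rewrite Pif_fn. cbn [fn Pcomp kJ Psnd Pfst]. simpof. cbn [Nat.eqb].
  cbn [fn Ppair Pzero Pconst Pcomp Pph Pext Ppred Psnd Pfst]. rewrite Ptab_fn. cbn [fn Pcomp kJ Psnd Pfst]. simpof.
  unfold dec. simpof. reflexivity.
Qed.

Definition Pwc0 : Prog := Piter (Pconst (lcode [1])) (Psucc_of (Ppair Pzero Psnd)).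
Definition Pwc : Prog := Pcomp Pwc0 (Ppair Pzero Pid).
Lemma Pwc_fn i : fn Pwc i = wcode (repeat false i ++ [true]).
Proof.
  unfold Pwc, Pwc0. cbn [fn Pcomp Ppair Pzero Pid Piter]. unfold iterf. rewrite ofto.
  induction i; [reflexivity|]. rewrite Nat.iter_succ, IHi. cbn [fn Psucc_of Ppair Pzero Psnd]. simpof. reflexivity.
Qed.
Definition kK : Prog :=
  let i := Pcomp Pfst Psnd in
  let c := Pcomp Pwc i in
  Ppair (Pconst 1) (Psucc_of (Padd c c)).
Lemma LX_K p s i m : LX kK (pairB p s) i m = s (wcode (repeat false (fst (of_nat m)) ++ [true])).
Proof.
  unfold LX, kv, kK. cbn [fn Ppair Pconst Psucc_of Padd Pcomp Psnd Pfst]. simpof. cbn [Nat.eqb snd].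
  rewrite Pwc_fn. unfold pairB. set (c := wcode _).
  replace (Nat.even (S (c + c))) with false.
  - f_equal. replace (S (c + c)) with (1 + 2 * c) by lia. rewrite Nat.div2_succ_double. reflexivity.
  - replace (S (c + c)) with (1 + 2 * c) by lia. rewrite Nat.even_add_mul_2. reflexivity.
Qed.
Definition Kout : Prog := Pifz (Pconst 1) Pzero (Peqb Pid (Pconst 1)).
Lemma Kout_fn v : fn Kout v = if v =? 1 then 0 else 1.
Proof. unfold Kout. cbn [fn Pifz Pconst Pzero]. rewrite Peqb_fn. cbn [fn Pid Pconst]. destruct (v =? 1); reflexivity. Qed.

Definition c1 := wcode [true].
Definition c0 := wcode [false].

Section Machines.
Variables e_cl e_resc e_un e_zo : prf.
Definition mEF := Outer e_cl (Plook kEF) Pid.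
Definition mR := Outer e_resc (Plook (kR c1)) Pid.
Definition mW := Compm mR e_zo.
Definition mF0 := Compm mEF (Outer e_resc (Plook (kF0 c0)) Sg0).
Definition mT := Disp mF0 mR.
Definition mU := Compm mT (Outer e_un (Plook kU) Pid).
Definition mM := Compm mU e_zo.
Definition mZ := Disp (code Pidm) (Disp mEF (Disp mW mM)).
Definition eH := Compm mZ (Outer (code Pidm) (Plook kfin) Sg0).
End Machines.

Definition eK := Outer (code (Pmapm Kout)) (Plook kK) Sg0.

Lemma Pid_out (R : nat -> Baire) m : (let (i, j) := of_nat (fn Pid m) in R i j) = tupleB R m.
Proof. reflexivity. Qed.
Lemma Sg0_out (R : nat -> Baire) m : (let (i, j) := of_nat (fn Sg0 m) in R i j) = R 0 m.
Proof. cbn [fn Sg0 Ppair Pzero Pid]. rewrite ofto. reflexivity. Qed.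

Lemma eK_ok p s : computes eK (pairB p s)
  (fun m => if s (wcode (repeat false (fst (of_nat m)) ++ [true])) =? 1 then 0 else 1).
Proof.
  eapply computes_ext; [apply (LookOuter_ok _ kK Sg0 (pairB p s) (fun i m => fn Kout (LX kK (pairB p s) i m)))|].
  - intros i. apply mapm_ok.
  - intros m. cbn [fn Sg0 Ppair Pzero Pid]. rewrite ofto, LX_K, Kout_fn. reflexivity.
Qed.

Section Game.
Variable xs : nat -> (list bool -> player) * (Cantor -> Prop).
Definition gA n := snd (xs n).
Definition gds n := fst (xs n).
Definition S2 : Cantor -> Prop := zero_op (fun n => rescale [true] (gA n)).
Definition S1 : Cantor -> Prop := zero_op (fun n x => rescale [false] (fun _ => True) x \/ rescale [true] (gA n) x).
Definition gval (x : Cantor) : nat :=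
  if excluded_middle_informative (S2 x) then 2 else if excluded_middle_informative (S1 x) then 1 else 0.
Lemma gval_lt x : gval x < 3.
Proof. unfold gval. destruct (excluded_middle_informative _); [lia|]. destruct (excluded_middle_informative _); lia. Qed.
Definition gpref (a : player) (o o' : nat) : bool := match a with P1 => o <? o' | P2 => o' <? o end.
Definition G : game2 := {| g_nout := 3; g_turn := tf gds 0; g_val := gval; g_val_lt := gval_lt; g_pref := gpref |}.

Lemma S2_S1 x : S2 x -> S1 x.
Proof.
  unfold S2, S1, zero_op. intros [H|[n [H1 [H2 H3]]]]; [left; auto|right]. exists n. auto.
Qed.

Lemma gval_2 x : gval x = 2 <-> S2 x.
Proof. unfold gval. destruct (excluded_middle_informative _); [tauto|]. destruct (excluded_middle_informative _); split; intros; try lia; tauto. Qed.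
Lemma gval_ge1 x : 1 <= gval x <-> S1 x.
Proof. unfold gval. destruct (excluded_middle_informative _) as [H|H]; [split; intros; auto using S2_S1; lia|].
  destruct (excluded_middle_informative _); split; intros; try lia; tauto. Qed.

Lemma antag : antag_linear G.
Proof.
  cbn. split; [|split; [|split]].
  - intros o _. apply Nat.ltb_irrefl.
  - intros o1 o2 o3 _ _ _ H1 H2. apply Nat.ltb_lt in H1, H2. apply Nat.ltb_lt. lia.
  - intros o1 o2 _ _ H. destruct (Nat.lt_trichotomy o1 o2) as [h|[h|h]]; [left|contradiction|right]; apply Nat.ltb_lt; auto.
  - reflexivity.
Qed.
End Game.

Section Hok.
Variable nm1 : pcrep.
Variables e_cl e_resc e_un e_zo : prf.
Hypothesis Hcl : forall p A, closed_name p A -> exists q, computes e_cl p q /\ nm1 q A.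
Hypothesis Hresc : forall w p A, nm1 p A -> exists q, computes e_resc (pairB (cst (wcode w)) p) q /\ nm1 q (rescale w A).
Hypothesis Hun : forall p q A B, nm1 p A -> nm1 q B -> exists r, computes e_un (pairB p q) r /\ nm1 r (fun x => A x \/ B x).
Hypothesis Hzo : forall ps As, (forall n, nm1 (ps n) (As n)) -> exists r, computes e_zo (tupleB ps) r /\ nm1 r (zero_op As).

Variable p : Baire.
Variable xs : nat -> (list bool -> player) * (Cantor -> Prop).
Hypothesis Hv : hat_rep (win_rep nm1) p xs.

Definition Empty : Cantor -> Prop := fun _ => False.
Definition Full : Cantor -> Prop := fun _ => True.

Lemma H_names : exists (EFs W M : Baire) (r : Baire),
  computes (eH e_cl e_resc e_un e_zo) p r /\
  nm1 (fun y => EFs (to_nat (0, y))) Empty /\ nm1 (fun y => EFs (to_nat (1, y))) Full /\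
  nm1 W (S2 xs) /\ nm1 M (S1 xs) /\
  (forall m, r m = LX kfin (fun n => let (i, j) := of_nat n in if i =? 0 then p j else
       (let (i2, j2) := of_nat j in if i2 =? 0 then EFs j2 else
         (let (i3, j3) := of_nat j2 in if i3 =? 0 then W j3 else M j3))) 0 m).
Proof.
  assert (HEF : forall i, exists q, computes e_cl (LX kEF p i) q /\ nm1 q (if i =? 0 then Empty else Full)).
  { intros i. apply Hcl. intros x. destruct i; cbn [Nat.eqb]; unfold Empty, Full; split.
    - intros [].
    - intros H. specialize (H 0). rewrite LX_EF in H. discriminate.
    - intros _ k. rewrite LX_EF. reflexivity.
    - auto. }
  destruct (functional_choice _ HEF) as [RfEF HRfEF].
  assert (CEF : computes (mEF e_cl) p (tupleB RfEF)).
  { eapply computes_ext; [apply LookOuter_ok; intros i; apply (HRfEF i)|]. intros m. reflexivity. }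
  assert (HR : forall n, exists q, computes e_resc (LX (kR c1) p n) q /\ nm1 q (rescale [true] (gA xs n))).
  { intros n. destruct (Hresc [true] (projB 1 (projB n p)) (gA xs n) (proj2 (Hv n))) as [q [Hq1 Hq2]].
    exists q. split; auto. eapply computes_in_ext; [|exact Hq1]. intros m. rewrite LX_R. reflexivity. }
  destruct (functional_choice _ HR) as [Rf HRf].
  assert (CR : computes (mR e_resc) p (tupleB Rf)).
  { eapply computes_ext; [apply LookOuter_ok; intros i; apply (HRf i)|]. intros m. reflexivity. }
  destruct (Hzo Rf (fun n => rescale [true] (gA xs n)) (fun n => proj2 (HRf n))) as [W [HW1 HW2]].
  assert (CW : computes (mW e_resc e_zo) p W) by (eapply Compm_ok; eauto).
  destruct (Hresc [false] (RfEF 1) Full (proj2 (HRfEF 1))) as [F0 [HF1 HF2]].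
  assert (CF0 : computes (mF0 e_cl e_resc) p F0).
  { eapply Compm_ok; [exact CEF|].
    eapply computes_ext; [apply (LookOuter_ok _ _ Sg0 _ (fun _ => F0)); intros i|].
    - eapply computes_in_ext; [|exact HF1]. intros m. rewrite LX_F0. unfold pairB.
      destruct (Nat.even m); [reflexivity|]. unfold tupleB. rewrite ofto. reflexivity.
    - intros m. cbn [fn Sg0 Ppair Pzero Pid]. rewrite ofto. reflexivity. }
  pose proof (Disp_ok _ _ _ _ _ CF0 CR) as CT. fold (mT e_cl e_resc) in CT.
  set (Tseq := fun n : nat => let (i, j) := of_nat n in if i =? 0 then F0 j else tupleB Rf j) in CT.
  assert (HU : forall n, exists q, computes e_un (LX kU Tseq n) q /\
       nm1 q (fun x => rescale [false] (fun _ => True) x \/ rescale [true] (gA xs n) x)).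
  { intros n. destruct (Hun F0 (Rf n) _ _ HF2 (proj2 (HRf n))) as [q [Hq1 Hq2]]. exists q. split; [|exact Hq2].
    eapply computes_in_ext; [|exact Hq1]. intros m. rewrite LX_U. unfold pairB, Tseq. simpof.
    destruct (Nat.even m); cbn [Nat.eqb]; [reflexivity|]. unfold tupleB. rewrite ofto. reflexivity. }
  destruct (functional_choice _ HU) as [Uf HUf].
  assert (CU : computes (mU e_cl e_resc e_un) p (tupleB Uf)).
  { eapply Compm_ok; [exact CT|]. eapply computes_ext; [apply LookOuter_ok; intros i; apply (HUf i)|].
    intros m. reflexivity. }
  destruct (Hzo Uf _ (fun n => proj2 (HUf n))) as [M [HM1 HM2]].
  assert (CM : computes (mM e_cl e_resc e_un e_zo) p M) by (eapply Compm_ok; eauto).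
  pose proof (Disp_ok _ _ _ _ _ CW CM) as C1.
  pose proof (Disp_ok _ _ _ _ _ CEF C1) as C2.
  pose proof (Disp_ok _ _ _ _ _ (idm_ok p) C2) as CZ.
  fold (mZ e_cl e_resc e_un e_zo) in CZ.
  set (Z := fun n : nat => let (i, j) := of_nat n in if i =? 0 then p j else _) in CZ.
  exists (tupleB RfEF), W, M, (fun m => LX kfin Z 0 m).
  split; [|split; [|split; [|split; [|split]]]].
  - eapply Compm_ok; [exact CZ|]. eapply computes_ext; [apply (LookOuter_ok _ _ Sg0 _ (fun i => LX kfin Z i)); intros i; apply idm_ok|].
    intros m. cbn [fn Sg0 Ppair Pzero Pid]. rewrite ofto. reflexivity.
  - replace (fun y => tupleB RfEF (to_nat (0, y))) with (RfEF 0).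
    + exact (proj2 (HRfEF 0)).
    + apply functional_extensionality. intros y. unfold tupleB. rewrite ofto. reflexivity.
  - replace (fun y => tupleB RfEF (to_nat (1, y))) with (RfEF 1).
    + exact (proj2 (HRfEF 1)).
    + apply functional_extensionality. intros y. unfold tupleB. rewrite ofto. reflexivity.
  - exact HW2.
  - exact HM2.
  - intros m. reflexivity.
Qed.
End Hok.

Lemma upper_cases xs a u : u < 2 ^ 3 -> upper_set (G xs) a (fun o => Nat.testbit u o = true) ->
  (a = P1 /\ (u = 0 \/ u = 4 \/ u = 6 \/ u = 7)) \/ (a = P2 /\ (u = 0 \/ u = 1 \/ u = 3 \/ u = 7)).
Proof.
  intros Hu [_ Hc]. cbn in Hu.
  destruct a; do 8 (destruct u as [|u]; [ first [ tauto | exfalso;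
      first [ discriminate (Hc 0 1 eq_refl ltac:(cbn; lia) eq_refl)
            | discriminate (Hc 0 2 eq_refl ltac:(cbn; lia) eq_refl)
            | discriminate (Hc 1 2 eq_refl ltac:(cbn; lia) eq_refl)
            | discriminate (Hc 1 0 eq_refl ltac:(cbn; lia) eq_refl)
            | discriminate (Hc 2 0 eq_refl ltac:(cbn; lia) eq_refl)
            | discriminate (Hc 2 1 eq_refl ltac:(cbn; lia) eq_refl) ] ] |]); lia.
Qed.

Section Grep.
Variable nm1 : pcrep.
Variable p : Baire.
Variable xs : nat -> (list bool -> player) * (Cantor -> Prop).
Hypothesis Hv : hat_rep (win_rep nm1) p xs.
Variables EFs W M r : Baire.
Hypothesis HE : nm1 (fun y => EFs (to_nat (0, y))) Empty.
Hypothesis HF : nm1 (fun y => EFs (to_nat (1, y))) Full.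
Hypothesis HW : nm1 W (S2 xs).
Hypothesis HM : nm1 M (S1 xs).
Let Z := (fun n => let (i, j) := of_nat n in if i =? 0 then p j else
       (let (i2, j2) := of_nat j in if i2 =? 0 then EFs j2 else
         (let (i3, j3) := of_nat j2 in if i3 =? 0 then W j3 else M j3))).
Hypothesis Hr : forall m, r m = LX kfin Z 0 m.

Lemma pred_eq (A B : Cantor -> Prop) : (forall x, A x <-> B x) -> A = B.
Proof. intros H. apply functional_extensionality. intros x. apply propositional_extensionality. auto. Qed.

Lemma Nname t : projB t (projB 3 r) 0 = tab t bit_tab 0 /\
  (fun y => projB t (projB 3 r) (S y)) =
  (fun y => let s := tab t src_tab 0 in Z (to_nat (1, to_nat (Nat.div2 s, to_nat (if Nat.even s then 0 else 1, y))))).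
Proof.
  split.
  - unfold projB. rewrite Hr, LX_fin. apply fin_D0.
  - apply functional_extensionality. intros y. unfold projB. rewrite Hr, LX_fin. apply fin_DS.
Qed.

Lemma ZE : (fun y => Z (to_nat (1, to_nat (0, to_nat (0, y))))) = (fun y => EFs (to_nat (0, y))).
Proof. apply functional_extensionality; intros y. unfold Z. simpof. reflexivity. Qed.
Lemma ZF : (fun y => Z (to_nat (1, to_nat (0, to_nat (1, y))))) = (fun y => EFs (to_nat (1, y))).
Proof. apply functional_extensionality; intros y. unfold Z. simpof. reflexivity. Qed.
Lemma ZW : (fun y => Z (to_nat (1, to_nat (1, to_nat (0, y))))) = W.
Proof. apply functional_extensionality; intros y. unfold Z. simpof. reflexivity. Qed.
Lemma ZM : (fun y => Z (to_nat (1, to_nat (1, to_nat (1, y))))) = M.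
Proof. apply functional_extensionality; intros y. unfold Z. simpof. reflexivity. Qed.

Ltac gv x := pose proof (gval_lt xs x); destruct (gval xs x) as [|[|[|?]]] eqn:?; try lia; cbn.

Lemma Pr0 : (fun x => Nat.testbit 0 (g_val (G xs) x) = true) = Empty.
Proof. apply pred_eq. intros x. cbn [G g_val]. unfold Empty. rewrite Nat.bits_0. split; [discriminate|intros []]. Qed.
Lemma Pr7 : (fun x => Nat.testbit 7 (g_val (G xs) x) = true) = Full.
Proof. apply pred_eq. intros x. cbn [G g_val]. unfold Full. gv x; tauto. Qed.
Lemma Pr4 : (fun x => Nat.testbit 4 (g_val (G xs) x) = true) = S2 xs.
Proof. apply pred_eq. intros x. cbn [G g_val]. rewrite <- gval_2. gv x; split; congruence. Qed.
Lemma Pr6 : (fun x => Nat.testbit 6 (g_val (G xs) x) = true) = S1 xs.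
Proof. apply pred_eq. intros x. cbn [G g_val]. rewrite <- gval_ge1. gv x; split; intros; try congruence; lia. Qed.
Lemma Pr1 x : Nat.testbit 1 (g_val (G xs) x) = true <-> ~ S1 xs x.
Proof. cbn [G g_val]. rewrite <- gval_ge1. gv x; split; intros; try congruence; lia. Qed.
Lemma Pr3 x : Nat.testbit 3 (g_val (G xs) x) = true <-> ~ S2 xs x.
Proof. cbn [G g_val]. rewrite <- gval_2. gv x; split; intros; try congruence; lia. Qed.

Lemma game_rep_ok : game_rep (compl_closure nm1) r (G xs).
Proof.
  unfold game_rep. split; [|split; [|split; [|split]]].
  - unfold projB. rewrite Hr, LX_fin, fin_A. reflexivity.
  - unfold projB. rewrite Hr, LX_fin, fin_A. reflexivity.
  - intros w. unfold projB. rewrite Hr, LX_fin. cbn [G g_turn]. apply fin_B.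
    intros n w'. unfold Z, gds. simpof. cbn [Nat.eqb]. destruct (Hv n) as [H1 _]. rewrite <- H1. reflexivity.
  - intros a o o' _ _. unfold projB. rewrite Hr, LX_fin, fin_C. cbn [G g_pref gpref].
    destruct a; cbn [player_code Nat.eqb gpref]; [destruct (o <? o')|destruct (o' <? o)]; reflexivity.
  - intros a u Hu Hup. destruct (Nname (to_nat (player_code a, u))) as [N0 NS].
    unfold compl_closure, Defs.tl. cbv beta. rewrite N0, NS.
    destruct (upper_cases xs a u Hu Hup) as [[-> Hu']|[-> Hu']];
      destruct Hu' as [ -> | [ -> | [ -> | -> ]]]; cbn [player_code];
      (let s := fresh in
       match goal with |- context [tab ?t src_tab 0] =>
         set (s := tab t src_tab 0); vm_compute in s; subst s end);
      match goal with |- context [tab ?t bit_tab 0] =>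
         let b := fresh in set (b := tab t bit_tab 0); vm_compute in b; subst b end;
      cbn [Nat.div2 Nat.even]; rewrite ?ZE, ?ZF, ?ZW, ?ZM, ?Pr0, ?Pr7, ?Pr4, ?Pr6.
    all: try (left; split; [reflexivity|assumption]).
    + right; split; [reflexivity|]. exists (S1 xs). split; [assumption|]. apply Pr1.
    + right; split; [reflexivity|]. exists (S2 xs). split; [assumption|]. apply Pr3.
Qed.
End Grep.

Lemma playpre_length s h n : length (playpre s h n) = n.
Proof. induction n; cbn [playpre]; [reflexivity|]. rewrite length_app, IHn. cbn. lia. Qed.

Definition pbit (s : list bool -> bool) (h : list bool) n :=
  if n <? length h then nth n h false else s (playpre s h n).

Lemma play_eq s h n : play s h n = pbit s h n.
Proof.
  unfold play. cbn [playpre]. rewrite app_nth2; rewrite playpre_length; [|lia].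
  rewrite Nat.sub_diag. reflexivity.
Qed.

Lemma prefix_play s h n : prefix (play s h) n = playpre s h n.
Proof.
  induction n; [reflexivity|]. rewrite prefix_S, IHn. cbn [playpre]. f_equal. f_equal.
  rewrite play_eq. reflexivity.
Qed.

Lemma play_lt s h n : n < length h -> play s h n = nth n h false.
Proof. intros H. rewrite play_eq. unfold pbit. replace (n <? length h) with true; [reflexivity|]. symmetry; apply Nat.ltb_lt; auto. Qed.

Lemma play_ge s h n : length h <= n -> play s h n = s (prefix (play s h) n).
Proof. intros H. rewrite play_eq, prefix_play. unfold pbit. replace (n <? length h) with false; [reflexivity|]. symmetry; apply Nat.ltb_ge; auto. Qed.

Lemma play_char s h (x : Cantor) :
  (forall n, n < length h -> x n = nth n h false) ->
  (forall n, length h <= n -> x n = s (prefix x n)) ->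
  forall n, x n = play s h n.
Proof.
  intros H1 H2 n. induction n as [n IH] using (well_founded_induction lt_wf).
  destruct (Nat.lt_ge_cases n (length h)).
  - rewrite H1, play_lt; auto.
  - rewrite H2, play_ge by auto. f_equal. apply prefix_ext. intros m Hm. apply IH. auto.
Qed.

Lemma prefix_length_b (x : Cantor) n : length (prefix x n) = n.
Proof. apply prefix_length. Qed.

Lemma nth_prefix (x : Cantor) n k : k < n -> nth k (prefix x n) false = x k.
Proof.
  intros H. unfold prefix. rewrite nth_indep with (d' := x 0) by (rewrite length_map, length_seq; auto).
  rewrite map_nth, seq_nth by auto. reflexivity.
Qed.

Lemma firstn_prefix (x : Cantor) n k : k <= n -> firstn k (prefix x n) = prefix x k.
Proof.
  intros H. unfold prefix. rewrite firstn_map. f_equal.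
  replace n with (k + (n - k)) by lia. rewrite seq_app, firstn_app, length_seq, Nat.sub_diag.
  rewrite firstn_all2 by (rewrite length_seq; lia). cbn. rewrite app_nil_r. reflexivity.
Qed.

Lemma skipn_prefix (x : Cantor) n k : k <= n -> skipn k (prefix x n) = map x (seq k (n - k)).
Proof.
  intros H. unfold prefix. rewrite skipn_map. f_equal.
  replace n with (k + (n - k)) at 1 by lia. rewrite seq_app, skipn_app, length_seq, Nat.sub_diag.
  rewrite skipn_all2 by (rewrite length_seq; lia). reflexivity.
Qed.

Lemma prefix_prepend w (y : Cantor) n : length w <= n ->
  prefix (prepend w y) n = w ++ prefix y (n - length w).
Proof.
  intros H. apply nth_ext with (d := false) (d' := false).
  - rewrite length_app, !prefix_length. lia.
  - intros k Hk. rewrite prefix_length in Hk. rewrite nth_prefix by auto. unfold prepend.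
    destruct (k <? length w) eqn:E; [apply Nat.ltb_lt in E|apply Nat.ltb_ge in E].
    + rewrite app_nth1; auto.
    + rewrite app_nth2 by auto. rewrite nth_prefix by lia. reflexivity.
Qed.

Lemma play_shift s w u0 n :
  play s (w ++ u0) n = prepend w (play (fun u => s (w ++ u)) u0) n.
Proof.
  symmetry. revert n. apply play_char.
  - intros n Hn. rewrite length_app in Hn. unfold prepend.
    destruct (n <? length w) eqn:E; [apply Nat.ltb_lt in E|apply Nat.ltb_ge in E].
    + rewrite app_nth1; auto.
    + rewrite app_nth2 by auto. apply play_lt. lia.
  - intros n Hn. rewrite length_app in Hn. unfold prepend at 1.
    replace (n <? length w) with false by (symmetry; apply Nat.ltb_ge; lia).
    rewrite play_ge by lia. rewrite prefix_prepend by lia. reflexivity.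
Qed.

Lemma play_nil_char s (y : Cantor) : (forall n, y n = s (prefix y n)) -> forall n, y n = play s [] n.
Proof. intros H. apply play_char; [cbn; intros; lia|]. intros; auto. Qed.

Fixpoint srch (P : nat -> Prop) (n : nat) : option nat :=
  match n with
  | 0 => if excluded_middle_informative (P 0) then Some 0 else None
  | S n => match srch P n with
           | Some k => Some k
           | None => if excluded_middle_informative (P (S n)) then Some (S n) else None
           end
  end.

Lemma srch_sound P n : match srch P n with
  | Some k => k <= n /\ P k /\ forall m, m < k -> ~ P m
  | None => forall m, m <= n -> ~ P m end.
Proof.
  induction n; cbn [srch].
  - destruct (excluded_middle_informative (P 0)); [split; [lia|split; auto; intros; lia]|].
    intros m Hm. replace m with 0 by lia. auto.
  - destruct (srch P n) as [k|].
    + destruct IHn as [H1 H2]. split; [lia|auto].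
    + destruct (excluded_middle_informative (P (S n))).
      * split; auto. split; auto. intros m Hm. apply IHn. lia.
      * intros m Hm. destruct (Nat.eq_dec m (S n)); [subst; auto|]. apply IHn. lia.
Qed.

Lemma srch_some P n k : P k -> k <= n -> (forall m, m < k -> ~ P m) -> srch P n = Some k.
Proof.
  intros Hk Hkn Hmin. pose proof (srch_sound P n) as H. destruct (srch P n) as [k'|].
  - destruct H as [H1 [H2 H3]]. f_equal. destruct (Nat.lt_trichotomy k k') as [h|[h|h]]; auto.
    + exfalso. apply (H3 k); auto.
    + exfalso. apply (Hmin k'); auto.
  - exfalso. apply (H k); auto.
Qed.

Lemma map_seq_shift (x : nat -> bool) a n : map x (seq a n) = map (fun m => x (a + m)) (seq 0 n).
Proof.
  revert a; induction n; intros a; [reflexivity|]. cbn [seq map]. rewrite Nat.add_0_r. f_equal.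
  rewrite IHn, <- seq_shift, map_map. apply map_ext. intros m. f_equal. lia.
Qed.

Lemma prefix_play_short s h n : n <= length h -> prefix (play s h) n = firstn n h.
Proof.
  intros H. apply nth_ext with (d := false) (d' := false).
  - rewrite prefix_length, length_firstn. lia.
  - intros k Hk. rewrite prefix_length in Hk. rewrite nth_prefix, play_lt by lia.
    rewrite nth_firstn. replace (k <? n) with true by (symmetry; apply Nat.ltb_lt; auto). reflexivity.
Qed.

Section Uniform.
Variable d : list bool -> player.
Variable A : Cantor -> Prop.
Variable b : player.
Definition good (x : Cantor) : Prop := match b with P1 => A x | P2 => ~ A x end.
Definition Winw w := has_win (fun v => d (w ++ v)) (unrescale w A) b.
Definition Specw w (sg : list bool -> bool) := forall t, (forall v, d (w ++ v) = b -> t v = sg v) ->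
  good (prepend w (play t [])).

Lemma Winw_spec w : Winw w -> exists sg, Specw w sg.
Proof. intros [sg H]. exists sg. intros t Ht. specialize (H t Ht). unfold good. destruct b; exact H. Qed.

Lemma sf_ex : exists sf : list bool -> list bool -> bool, forall w, Winw w -> Specw w (sf w).
Proof.
  apply (functional_choice (fun w sg => Winw w -> Specw w sg)).
  intros w. destruct (classic (Winw w)) as [H|H].
  - destruct (Winw_spec w H) as [sg Hs]. exists sg. auto.
  - exists (fun _ => false). intros; contradiction.
Qed.

Variable sf : list bool -> list bool -> bool.
Hypothesis Hsf : forall w, Winw w -> Specw w (sf w).

Definition Cand (w : list bool) (l : nat) : Prop :=
  Winw (firstn l w) /\ forall k, l <= k < length w -> d (firstn k w) = b ->
    nth k w false = sf (firstn l w) (skipn l (firstn k w)).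

Definition tau (w : list bool) : bool :=
  match srch (Cand w) (length w) with Some l => sf (firstn l w) (skipn l w) | None => false end.

Section Play.
Variable t : list bool -> bool.
Hypothesis Ht : forall u, d u = b -> t u = tau u.
Variable u0 : list bool.
Hypothesis Hu0 : Winw u0.
Let x := play t u0.
Let L := length u0.

Definition CandX n l := Winw (prefix x l) /\ forall k, l <= k < n -> d (prefix x k) = b ->
    x k = sf (prefix x l) (skipn l (prefix x k)).

Lemma Cand_X n l : l <= n -> (Cand (prefix x n) l <-> CandX n l).
Proof.
  intros Hl. unfold Cand, CandX. rewrite prefix_length, firstn_prefix by auto.
  split; intros [H1 H2]; split; auto; intros k Hk Hd.
  - specialize (H2 k Hk). rewrite firstn_prefix in H2 by lia. rewrite nth_prefix in H2 by lia. apply H2; auto.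
  - rewrite firstn_prefix by lia. rewrite nth_prefix by lia. apply H2; auto. rewrite firstn_prefix in Hd by lia. auto.
Qed.

Lemma CandX_mono n n' l : n' <= n -> CandX n l -> CandX n' l.
Proof. intros H [H1 H2]. split; auto. intros k Hk. apply H2. lia. Qed.

Lemma prefix_x_L : prefix x L = u0.
Proof. unfold x, L. rewrite prefix_play_short by lia. apply firstn_all. Qed.

Lemma inv_start : exists ls, srch (Cand (prefix x L)) L = Some ls /\ ls <= L /\ CandX L ls /\
   forall m, m < ls -> ~ CandX L m.
Proof.
  pose proof (srch_sound (Cand (prefix x L)) L) as H. destruct (srch (Cand (prefix x L)) L) as [ls|].
  - destruct H as [H1 [H2 H3]]. exists ls. split; auto. split; auto. split.
    + apply Cand_X; auto.
    + intros m Hm HC. apply (H3 m Hm). apply Cand_X; auto. lia.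
  - exfalso. apply (H L); auto. rewrite prefix_x_L. split.
    + rewrite firstn_all2 by lia. auto.
    + intros k Hk. unfold L in Hk. lia.
Qed.

Lemma inv_all ls : srch (Cand (prefix x L)) L = Some ls -> forall n, L <= n ->
  srch (Cand (prefix x n)) n = Some ls /\ CandX n ls /\ ls <= n /\ forall m, m < ls -> ~ CandX n m.
Proof.
  intros Hs n Hn. induction n as [|n IH].
  - assert (L = 0) by lia. rewrite <- H. pose proof (srch_sound (Cand (prefix x L)) L) as S. rewrite Hs in S.
    destruct S as [S1 [S2 S3]]. split; auto. split; [apply Cand_X; auto|]. split; auto.
    intros m Hm HC. apply (S3 m Hm). apply Cand_X; auto. lia.
  - destruct (Nat.eq_dec L (S n)) as [E|E].
    + rewrite <- E. pose proof (srch_sound (Cand (prefix x L)) L) as S. rewrite Hs in S.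
      destruct S as [S1 [S2 S3]]. split; auto. split; [apply Cand_X; auto|]. split; auto.
      intros m Hm HC. apply (S3 m Hm). apply Cand_X; auto. lia.
    + destruct (IH ltac:(lia)) as [I1 [I2 [I3 I4]]].
      assert (CX : CandX (S n) ls).
      { destruct I2 as [J1 J2]. split; auto. intros k Hk Hd.
        destruct (Nat.eq_dec k n) as [->|Hkn]; [|apply J2; auto; lia].
        unfold x at 1. rewrite play_ge by (unfold L in *; lia). fold x.
        rewrite Ht by auto. unfold tau. rewrite prefix_length, I1.
        rewrite firstn_prefix by lia. reflexivity. }
      split; [|split; [exact CX|split; [lia|]]].
      * apply srch_some; [apply Cand_X; auto; lia|lia|].
        intros m Hm HC. apply (I4 m Hm). apply Cand_X in HC; [|lia]. eapply CandX_mono; [|exact HC]. lia.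
      * intros m Hm HC. apply (I4 m Hm). eapply CandX_mono; [|exact HC]. lia.
Qed.

Lemma uniform_good : good x.
Proof.
  destruct inv_start as [ls [Hs [HlsL [HC _]]]].
  assert (Cons : forall k, ls <= k -> d (prefix x k) = b -> x k = sf (prefix x ls) (skipn ls (prefix x k))).
  { intros k Hk Hd. destruct (inv_all ls Hs (Nat.max L (S k)) ltac:(lia)) as [_ [[_ C2] _]].
    apply C2; auto. lia. }
  assert (Wv : Winw (prefix x ls)) by (destruct HC; auto).
  set (v := prefix x ls) in *.
  set (t' := fun u : list bool => if list_eq_dec Bool.bool_dec u (map x (seq ls (length u)))
                                  then x (ls + length u) else sf v u).
  assert (Agree : forall u, d (v ++ u) = b -> t' u = sf v u).
  { intros u Hd. unfold t'. destruct (list_eq_dec Bool.bool_dec u (map x (seq ls (length u)))) as [E|E]; auto.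
    assert (Pv : v ++ u = prefix x (ls + length u)).
    { unfold v, prefix. rewrite seq_app, map_app. f_equal. exact E. }
    rewrite Pv in Hd. rewrite (Cons (ls + length u) ltac:(lia) Hd). f_equal.
    rewrite skipn_prefix by lia. replace (ls + length u - ls) with (length u) by lia. symmetry. exact E. }
  pose proof (Hsf v Wv t' Agree) as G.
  assert (Py : forall n, x (ls + n) = play t' [] n).
  { apply (play_nil_char t' (fun n => x (ls + n))). intros n. unfold t'.
    rewrite prefix_length.
    destruct (list_eq_dec Bool.bool_dec (prefix (fun n0 : nat => x (ls + n0)) n) (map x (seq ls n))) as [E|E]; auto.
    exfalso. apply E. unfold prefix. rewrite (map_seq_shift x ls n). reflexivity. }
  assert (Ex : prepend v (play t' []) = x).
  { apply functional_extensionality. intros n. unfold prepend. unfold v at 1. rewrite prefix_length.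
    destruct (n <? ls) eqn:En; [apply Nat.ltb_lt in En|apply Nat.ltb_ge in En].
    - unfold v. rewrite nth_prefix; auto.
    - rewrite <- Py. f_equal. unfold v. rewrite prefix_length. lia. }
  rewrite Ex in G. exact G.
Qed.
End Play.
End Uniform.

Theorem uniform_strategy d A b : exists tau : list bool -> bool, forall u0, Winw d A b u0 ->
  forall t, (forall u, d u = b -> t u = tau u) -> good A b (play t u0).
Proof.
  destruct (sf_ex d A b) as [sf Hsf]. exists (tau d A b sf). intros u0 Hu0 t Ht.
  apply (uniform_good d A b sf Hsf t Ht u0 Hu0).
Qed.

Lemma play_step s h n : play s h n = play s (h ++ [s h]) n.
Proof.
  revert n. apply play_char.
  - intros n Hn. rewrite length_app in Hn. cbn in Hn.
    destruct (Nat.lt_ge_cases n (length h)).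
    + rewrite app_nth1 by auto. apply play_lt; auto.
    + assert (n = length h) by lia. subst n. rewrite app_nth2, Nat.sub_diag by lia. cbn [nth].
      rewrite play_ge by lia. f_equal. rewrite prefix_play_short by lia. apply firstn_all.
  - intros n Hn. rewrite length_app in Hn. cbn in Hn. apply play_ge. lia.
Qed.

Lemma play_ext s h x : (forall n, x n = play s h n) -> play s h = x.
Proof. intros H. apply functional_extensionality. intros n. auto. Qed.

Definition Z11 z := repeat false z ++ [true; true].

Section Vals.
Variable xs : nat -> (list bool -> player) * (Cantor -> Prop).

Lemma first_true (x : Cantor) z n : (forall k, k < z -> x k = false) -> x z = true ->
  (forall k, k < n -> x k = false) -> x n = true -> n = z.
Proof.
  intros H1 H2 H3 H4. destruct (Nat.lt_trichotomy n z) as [h|[h|h]]; auto.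
  - rewrite H1 in H4 by auto. discriminate.
  - rewrite H3 in H2 by auto. discriminate.
Qed.

Lemma V0 : gval xs (fun _ => false) = 2.
Proof. apply gval_2. left. auto. Qed.

Lemma V1 (x : Cantor) z : (forall k, k < z -> x k = false) -> x z = true -> x (S z) = false -> gval xs x = 1.
Proof.
  intros H1 H2 H3. unfold gval.
  destruct (excluded_middle_informative (S2 xs x)) as [HS|HS].
  - exfalso. destruct HS as [HS|[n [N1 [N2 N3]]]]; [rewrite HS in H2; discriminate|].
    assert (n = z) by (eapply first_true; eauto). subst n.
    destruct N3 as [N3 _]. unfold has_prefix, prefix in N3. cbn in N3. rewrite Nat.add_0_r in N3.
    injection N3 as N3. rewrite H3 in N3. discriminate.
  - destruct (excluded_middle_informative (S1 xs x)) as [HS'|HS']; auto.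
    exfalso. apply HS'. right. exists z. split; auto. split; auto. left. split; [|exact I].
    unfold has_prefix, prefix. cbn. rewrite Nat.add_0_r, H3. reflexivity.
Qed.

Lemma V2 (x : Cantor) z : (forall k, k < z -> x k = false) -> x z = true -> x (S z) = true ->
  (gA xs z (fun m => x (S (S z) + m)) -> gval xs x = 2) /\ (~ gA xs z (fun m => x (S (S z) + m)) -> gval xs x = 0).
Proof.
  intros H1 H2 H3. split.
  - intros HA. apply gval_2. right. exists z. split; auto. split; auto. split.
    + unfold has_prefix, prefix. cbn. rewrite Nat.add_0_r, H3. reflexivity.
    + cbn [length]. replace (fun n => x (S z + (1 + n))) with (fun m => x (S (S z) + m)); auto.
      apply functional_extensionality; intros; f_equal; lia.
  - intros HA. unfold gval.
    destruct (excluded_middle_informative (S2 xs x)) as [HS|HS].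
    { exfalso. destruct HS as [HS|[n [N1 [N2 N3]]]]; [rewrite HS in H2; discriminate|].
      assert (n = z) by (eapply first_true; eauto). subst n. destruct N3 as [_ N3]. apply HA.
      cbn [length] in N3. replace (fun m => x (S (S z) + m)) with (fun n => x (S z + (1 + n))); auto.
      apply functional_extensionality; intros; f_equal; lia. }
    destruct (excluded_middle_informative (S1 xs x)) as [HS'|HS']; auto.
    exfalso. destruct HS' as [HS'|[n [N1 [N2 N3]]]]; [rewrite HS' in H2; discriminate|].
    assert (n = z) by (eapply first_true; eauto). subst n.
    destruct N3 as [[N3 _]|[_ N3]].
    + unfold has_prefix, prefix in N3. cbn in N3. rewrite Nat.add_0_r, H3 in N3. discriminate.
    + apply HA. cbn [length] in N3. replace (fun m => x (S (S z) + m)) with (fun n => x (S z + (1 + n))); auto.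
      apply functional_extensionality; intros; f_equal; lia.
Qed.

Lemma nth_zeros_app z r k : k < z -> nth k (repeat false z ++ r) false = false.
Proof. intros H. rewrite app_nth1 by (rewrite repeat_length; auto). apply nth_repeat. Qed.
Lemma nth_zeros_app2 z r k : nth (z + k) (repeat false z ++ r) false = nth k r false.
Proof. rewrite app_nth2 by (rewrite repeat_length; lia). rewrite repeat_length. f_equal. lia. Qed.

Lemma nth_z0 z r : nth z (repeat false z ++ r) false = nth 0 r false.
Proof. rewrite <- (nth_zeros_app2 z r 0). rewrite Nat.add_0_r. reflexivity. Qed.
Lemma nth_z1 z r : nth (S z) (repeat false z ++ r) false = nth 1 r false.
Proof. rewrite <- (nth_zeros_app2 z r 1). f_equal. lia. Qed.

Lemma R10 t z v : gval xs (play t (repeat false z ++ true :: false :: v)) = 1.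
Proof.
  apply (V1 _ z).
  - intros k Hk. rewrite play_lt by (rewrite length_app, repeat_length; cbn; lia). apply nth_zeros_app; auto.
  - rewrite play_lt by (rewrite length_app, repeat_length; cbn; lia).
    rewrite nth_z0. reflexivity.
  - rewrite play_lt by (rewrite length_app, repeat_length; cbn; lia).
    rewrite nth_z1. reflexivity.
Qed.

Definition UW (b : player) (z : nat) (tau : list bool -> bool) (u0 : list bool) :=
  forall t, (forall u, gds xs z u = b -> t u = tau u) -> good (gA xs z) b (play t u0).

Lemma R11 t z u0 b tau : (forall u, gds xs z u = b -> t (Z11 z ++ u) = tau u) -> UW b z tau u0 ->
  gval xs (play t (Z11 z ++ u0)) = match b with P1 => 2 | P2 => 0 end.
Proof.
  intros Ha HU. set (t' := fun u => t (Z11 z ++ u)).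
  specialize (HU t' Ha).
  assert (Hx : forall n, play t (Z11 z ++ u0) n = prepend (Z11 z) (play t' u0) n) by (intros; apply play_shift).
  set (x := play t (Z11 z ++ u0)) in *.
  assert (L : length (Z11 z) = S (S z)) by (unfold Z11; rewrite length_app, repeat_length; cbn; lia).
  assert (Hsh : (fun m => x (S (S z) + m)) = play t' u0).
  { apply functional_extensionality. intros m. rewrite Hx. unfold prepend. rewrite L.
    replace (S (S z) + m <? S (S z)) with false by (symmetry; apply Nat.ltb_ge; lia). f_equal. lia. }
  assert (B1 : forall k, k < z -> x k = false).
  { intros k Hk. rewrite Hx. unfold prepend. rewrite L. replace (k <? S (S z)) with true by (symmetry; apply Nat.ltb_lt; lia).
    unfold Z11. apply nth_zeros_app; auto. }
  assert (B2 : x z = true).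
  { rewrite Hx. unfold prepend. rewrite L. replace (z <? S (S z)) with true by (symmetry; apply Nat.ltb_lt; lia).
    unfold Z11. rewrite nth_z0. reflexivity. }
  assert (B3 : x (S z) = true).
  { rewrite Hx. unfold prepend. rewrite L. replace (S z <? S (S z)) with true by (symmetry; apply Nat.ltb_lt; lia).
    unfold Z11. rewrite nth_z1. reflexivity. }
  destruct (V2 x z B1 B2 B3) as [V2a V2b]. rewrite Hsh in V2a, V2b.
  destruct b; cbn in HU; auto.
Qed.

Lemma R0 t z : (forall n, t (repeat false n) = false) -> gval xs (play t (repeat false z)) = 2.
Proof.
  intros H. rewrite (play_ext t (repeat false z) (fun _ => false)); [apply V0|].
  apply play_char.
  - intros n Hn. rewrite repeat_length in Hn. rewrite nth_repeat. reflexivity.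
  - intros n _. replace (prefix (fun _ => false) n) with (repeat false n); [auto|].
    unfold prefix. rewrite map_const, length_seq. reflexivity.
Qed.
End Vals.

Fixpoint split0 (w : list bool) : nat * list bool :=
  match w with false :: w' => let (z, r) := split0 w' in (S z, r) | _ => (0, w) end.

Lemma split0_zeros z r : (r = [] \/ exists r', r = true :: r') -> split0 (repeat false z ++ r) = (z, r).
Proof.
  intros H. induction z; cbn [repeat app split0].
  - destruct H as [->|[r' ->]]; reflexivity.
  - rewrite IHz. reflexivity.
Qed.

Lemma split0_spec w : w = repeat false (fst (split0 w)) ++ snd (split0 w) /\
  (snd (split0 w) = [] \/ exists r', snd (split0 w) = true :: r').
Proof.
  induction w as [|[|] w IH]; cbn [split0].
  - auto.
  - cbn. split; eauto.
  - destruct (split0 w) as [z r]. cbn in *. destruct IH as [IH1 IH2]. split; auto. rewrite IH1 at 1. reflexivity.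
Qed.

Definition peqb (a b : player) : bool := match a, b with P1, P1 | P2, P2 => true | _, _ => false end.
Lemma peqb_eq a b : peqb a b = true <-> a = b.
Proof. destruct a, b; cbn; split; congruence. Qed.

Lemma tf_Z11 ds z u : tf ds 0 (Z11 z ++ u) = ds z u.
Proof. unfold Z11. rewrite <- app_assoc, tf_zeros. reflexivity. Qed.
Lemma tf_z ds z : tf ds 0 (repeat false z) = P1.
Proof. rewrite <- (app_nil_r (repeat false z)), tf_zeros. reflexivity. Qed.
Lemma tf_z1 ds z : tf ds 0 (repeat false z ++ [true]) = P1.
Proof. rewrite tf_zeros. reflexivity. Qed.

Lemma split0_Z11 z u : split0 (Z11 z ++ u) = (z, true :: true :: u).
Proof. unfold Z11. rewrite <- app_assoc. apply split0_zeros. right; eauto. Qed.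

Lemma Z11_eq z : (repeat false z ++ [true]) ++ [true] = Z11 z ++ [].
Proof. unfold Z11. rewrite app_nil_r, <- app_assoc. reflexivity. Qed.
Lemma Z10_eq z : (repeat false z ++ [true]) ++ [false] = repeat false z ++ true :: false :: [].
Proof. rewrite <- app_assoc. reflexivity. Qed.

Lemma play_step_eq s h : play s h = play s (h ++ [s h]).
Proof. apply functional_extensionality. intros n. apply play_step. Qed.

Lemma pref_lt3 a o : o < 3 -> (a = P1 -> gpref a 2 o = false) /\ (a = P2 -> gpref a 0 o = false).
Proof. intros H. split; intros ->; cbn [gpref]; apply Nat.ltb_ge; lia. Qed.
Lemma pref_refl a o : gpref a o o = false.
Proof. destruct a; apply Nat.ltb_irrefl. Qed.

Lemma Winw_nil d A b : has_win d A b -> Winw d A b [].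
Proof.
  intros [sg H]. exists sg. intros t Ht. specialize (H t Ht). unfold unrescale.
  replace (prepend [] (play t [])) with (play t []); auto.
  apply functional_extensionality. intros n. unfold prepend. cbn. rewrite Nat.sub_0_r. reflexivity.
Qed.

Section SPE.
Variable xs : nat -> (list bool -> player) * (Cantor -> Prop).
Hypothesis Hdet : forall z u, Winw (gds xs z) (gA xs z) P1 u \/ Winw (gds xs z) (gA xs z) P2 u.

Lemma taus : exists T : player -> nat -> list bool -> bool, forall b z u0,
  Winw (gds xs z) (gA xs z) b u0 -> UW xs b z (T b z) u0.
Proof.
  assert (H : forall bz : player * nat, exists tau, forall u0, Winw (gds xs (snd bz)) (gA xs (snd bz)) (fst bz) u0 ->
     UW xs (fst bz) (snd bz) tau u0).
  { intros [b z]. destruct (uniform_strategy (gds xs z) (gA xs z) b) as [tau Ht]. exists tau. exact Ht. }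
  destruct (functional_choice _ H) as [T HT]. exists (fun b z => T (b, z)). intros b z u0. apply (HT (b, z)).
Qed.

Theorem SPE_exists : exists s, is_SPE (G xs) s.
Proof.
  destruct taus as [T HT].
  set (bz := fun z => if excluded_middle_informative (has_win (gds xs z) (gA xs z) P1) then true else false).
  set (s := fun w => let (z, r) := split0 w in match r with
       | [true] => bz z
       | true :: true :: u => T (gds xs z u) z u
       | _ => false end).
  assert (Sz : forall n, s (repeat false n) = false).
  { intros n. unfold s. rewrite <- (app_nil_r (repeat false n)). rewrite split0_zeros by auto. reflexivity. }
  assert (S1z : forall z, s (repeat false z ++ [true]) = bz z).
  { intros z. unfold s. rewrite split0_zeros by (right; eauto). reflexivity. }
  assert (S11 : forall z u, s (Z11 z ++ u) = T (gds xs z u) z u).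
  { intros z u. unfold s. rewrite split0_Z11. reflexivity. }
  assert (Ag : forall s' z b, (forall w, tf (gds xs) 0 w = b -> s' w = s w) ->
            forall u, gds xs z u = b -> s' (Z11 z ++ u) = T b z u).
  { intros s' z b H u Hu. rewrite H by (rewrite tf_Z11; auto). rewrite S11, Hu. reflexivity. }
  exists s. intros h a s' Hs'. cbn [G g_turn g_val g_pref] in *.
  assert (Hs'2 : forall b, b <> a -> forall w, tf (gds xs) 0 w = b -> s' w = s w).
  { intros b Hb w Hw. apply Hs'. congruence. }
  destruct (split0_spec h) as [Eh Hr]. destruct (split0 h) as [z r]. cbn [fst snd] in *. subst h.
  destruct Hr as [->|[r' ->]].
  - rewrite app_nil_r. rewrite (R0 xs s z Sz).
    destruct a; [apply pref_lt3; auto using gval_lt|].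
    rewrite (R0 xs s' z); [reflexivity|]. intros n. rewrite (Hs'2 P1); auto; [discriminate|apply tf_z].
  - destruct r' as [|[|] v].
    + (* h = 0^z 1 *)
      rewrite (play_step_eq s), S1z. unfold bz.
      destruct (excluded_middle_informative (has_win (gds xs z) (gA xs z) P1)) as [W1|W1].
      * rewrite Z11_eq. rewrite (R11 xs s z [] P1 (T P1 z)); [|intros u Hu; rewrite S11, Hu; auto|].
        2:{ apply HT. apply Winw_nil. auto. }
        destruct a; [apply pref_lt3; auto using gval_lt|].
        rewrite (play_step_eq s'), (Hs'2 P1) by (auto; try discriminate; apply tf_z1). rewrite S1z. unfold bz.
        destruct (excluded_middle_informative _); [|contradiction].
        rewrite Z11_eq. rewrite (R11 xs s' z [] P1 (T P1 z)); [reflexivity| |].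
        -- apply Ag. apply Hs'2. discriminate.
        -- apply HT. apply Winw_nil. auto.
      * assert (W2 : Winw (gds xs z) (gA xs z) P2 []).
        { destruct (Hdet z []) as [H|H]; auto. exfalso. apply W1. destruct H as [sg H]. exists sg.
          intros t Ht. specialize (H t Ht). unfold unrescale in H.
          replace (prepend [] (play t [])) with (play t []) in H; auto.
          apply functional_extensionality. intros n. unfold prepend. cbn. rewrite Nat.sub_0_r. reflexivity. }
        rewrite Z10_eq, R10.
        destruct a.
        -- rewrite (play_step_eq s'). destruct (s' (repeat false z ++ [true])).
           ++ rewrite Z11_eq. rewrite (R11 xs s' z [] P2 (T P2 z)); [reflexivity| |].
              ** apply Ag. apply Hs'2. discriminate.
              ** apply HT. auto.
           ++ rewrite Z10_eq, R10. reflexivity.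
        -- rewrite (play_step_eq s'), (Hs'2 P1) by (auto; try discriminate; apply tf_z1). rewrite S1z. unfold bz.
           destruct (excluded_middle_informative _); [contradiction|].
           rewrite Z10_eq, R10. reflexivity.
    + (* inside game z *)
      replace (repeat false z ++ true :: true :: v) with (Z11 z ++ v) by (unfold Z11; rewrite <- app_assoc; reflexivity).
      destruct (Hdet z v) as [W|W].
      * rewrite (R11 xs s z v P1 (T P1 z)); [|intros u Hu; rewrite S11, Hu; auto|apply HT; auto].
        destruct a; [apply pref_lt3; auto using gval_lt|].
        rewrite (R11 xs s' z v P1 (T P1 z)); [reflexivity| |apply HT; auto].
        apply Ag. apply Hs'2. discriminate.
      * rewrite (R11 xs s z v P2 (T P2 z)); [|intros u Hu; rewrite S11, Hu; auto|apply HT; auto].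
        destruct a; [|apply pref_lt3; auto using gval_lt].
        rewrite (R11 xs s' z v P2 (T P2 z)); [reflexivity| |apply HT; auto].
        apply Ag. apply Hs'2. discriminate.
    + rewrite !R10. apply pref_refl.
Qed.
End SPE.

Section Analysis.
Variable xs : nat -> (list bool -> player) * (Cantor -> Prop).
Variable s : list bool -> bool.
Hypothesis Hs : is_SPE (G xs) s.

Definition devz (z : nat) (b : player) (sg : list bool -> bool) (w : list bool) : bool :=
  let (z', r) := split0 w in
  match r with
  | true :: true :: u => if andb (z' =? z) (peqb (gds xs z u) b) then sg u else s w
  | _ => s w end.

Lemma devz_agree z b sg : forall w, tf (gds xs) 0 w <> b -> devz z b sg w = s w.
Proof.
  intros w Hw. unfold devz. destruct (split0_spec w) as [Ew _]. destruct (split0 w) as [z' r].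
  cbn [fst snd] in Ew. destruct r as [|[|] [|[|] u]]; auto.
  destruct (andb (z' =? z) (peqb (gds xs z u) b)) eqn:E; auto.
  apply andb_prop in E. destruct E as [E1 E2]. apply Nat.eqb_eq in E1. apply peqb_eq in E2. subst z' b.
  exfalso. apply Hw. rewrite Ew. replace (repeat false z ++ true :: true :: u) with (Z11 z ++ u)
    by (unfold Z11; rewrite <- app_assoc; reflexivity). rewrite tf_Z11. auto.
Qed.

Lemma devz_region z b sg u : gds xs z u = b -> devz z b sg (Z11 z ++ u) = sg u.
Proof.
  intros H. unfold devz. rewrite split0_Z11, Nat.eqb_refl. subst b. destruct (gds xs z u); reflexivity.
Qed.

Lemma devz_h z b sg : devz z b sg (repeat false z ++ [true]) = s (repeat false z ++ [true]).
Proof. unfold devz. rewrite split0_zeros by (right; eauto). reflexivity. Qed.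

Lemma UW_root z b sg : (forall t, (forall w, gds xs z w = b -> t w = sg w) ->
   match b with P1 => gA xs z (play t []) | P2 => ~ gA xs z (play t []) end) -> UW xs b z sg [].
Proof. intros H t Ht. specialize (H t Ht). unfold good. destruct b; exact H. Qed.

Lemma A1 z : has_win (gds xs z) (gA xs z) P1 -> s (repeat false z ++ [true]) = true.
Proof.
  intros [sg Hsg]. destruct (s (repeat false z ++ [true])) eqn:E; auto. exfalso.
  set (h := repeat false z ++ [true]) in *.
  set (s' := fun w => if list_eq_dec Bool.bool_dec w h then true else devz z P1 sg w).
  assert (Ag : forall w, g_turn (G xs) w <> P1 -> s' w = s w).
  { intros w Hw. unfold s'. destruct (list_eq_dec Bool.bool_dec w h).
    - exfalso. apply Hw. subst. apply tf_z1.
    - apply devz_agree. exact Hw. }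
  specialize (Hs h P1 s' Ag). cbn [G g_val g_pref gpref] in Hs.
  rewrite (play_step_eq s h), E in Hs. unfold h in Hs. rewrite Z10_eq, R10 in Hs.
  rewrite (play_step_eq s' (repeat false z ++ [true])) in Hs.
  replace (s' (repeat false z ++ [true])) with true in Hs by (unfold s'; destruct (list_eq_dec _ _ _) as [_|n]; [reflexivity|exfalso; apply n; reflexivity]).
  rewrite Z11_eq in Hs. rewrite (R11 xs s' z [] P1 sg) in Hs.
  - discriminate.
  - intros u Hu. unfold s'. destruct (list_eq_dec Bool.bool_dec (Z11 z ++ u) h) as [e|e].
    + exfalso. apply (f_equal (@length bool)) in e. unfold h, Z11 in e.
      rewrite !length_app, repeat_length in e. cbn in e. lia.
    + apply devz_region. auto.
  - apply UW_root. exact Hsg.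
Qed.

Lemma Z11_bits t z u0 : gval xs (play t (Z11 z ++ u0)) = 0 \/ gval xs (play t (Z11 z ++ u0)) = 2.
Proof.
  set (x := play t (Z11 z ++ u0)).
  assert (L : length (Z11 z) = S (S z)) by (unfold Z11; rewrite length_app, repeat_length; cbn; lia).
  assert (B1 : forall k, k < z -> x k = false).
  { intros k Hk. unfold x. rewrite play_lt by (rewrite length_app; lia). rewrite app_nth1 by lia.
    unfold Z11. apply nth_zeros_app; auto. }
  assert (B2 : x z = true).
  { unfold x. rewrite play_lt by (rewrite length_app; lia). rewrite app_nth1 by lia. unfold Z11. rewrite nth_z0. reflexivity. }
  assert (B3 : x (S z) = true).
  { unfold x. rewrite play_lt by (rewrite length_app; lia). rewrite app_nth1 by lia. unfold Z11. rewrite nth_z1. reflexivity. }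
  destruct (V2 xs x z B1 B2 B3) as [V2a V2b].
  destruct (classic (gA xs z (fun m => x (S (S z) + m)))); auto.
Qed.

Lemma A2 z : has_win (gds xs z) (gA xs z) P2 -> s (repeat false z ++ [true]) = false.
Proof.
  intros [sg Hsg]. destruct (s (repeat false z ++ [true])) eqn:E; auto. exfalso.
  set (h := repeat false z ++ [true]) in *.
  assert (Hp : play s h = play s (Z11 z ++ [])) by (rewrite (play_step_eq s h), E; unfold h; rewrite Z11_eq; reflexivity).
  destruct (Z11_bits s z []) as [V|V].
  - set (s' := fun w => if list_eq_dec Bool.bool_dec w h then false else s w).
    assert (Ag : forall w, g_turn (G xs) w <> P1 -> s' w = s w).
    { intros w Hw. unfold s'. destruct (list_eq_dec Bool.bool_dec w h); auto.
      exfalso. apply Hw. subst. apply tf_z1. }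
    specialize (Hs h P1 s' Ag). cbn [G g_val g_pref gpref] in Hs.
    rewrite Hp, V in Hs. rewrite (play_step_eq s' h) in Hs.
    replace (s' h) with false in Hs by (unfold s'; destruct (list_eq_dec _ _ _) as [_|n]; [reflexivity|exfalso; apply n; reflexivity]).
    unfold h in Hs. rewrite Z10_eq, R10 in Hs. discriminate.
  - set (s' := devz z P2 sg).
    assert (Ag : forall w, g_turn (G xs) w <> P2 -> s' w = s w) by (intros; apply devz_agree; auto).
    specialize (Hs h P2 s' Ag). cbn [G g_val g_pref gpref] in Hs.
    rewrite Hp, V in Hs. rewrite (play_step_eq s' h) in Hs.
    replace (s' h) with true in Hs by (unfold s', h; rewrite devz_h; auto).
    unfold h in Hs. rewrite Z11_eq in Hs. rewrite (R11 xs s' z [] P2 sg) in Hs.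
    + discriminate.
    + intros u Hu. apply devz_region. auto.
    + apply UW_root. exact Hsg.
Qed.
End Analysis.

Definition mfun (e : prf) (p : Baire) : option Baire :=
  match excluded_middle_informative (exists q, computes e p q) with
  | left ex => Some (proj1_sig (constructive_indefinite_description _ ex))
  | right _ => None
  end.

Lemma mfun_computable e : computable (mfun e).
Proof.
  exists e. intros p q. unfold mfun. destruct (excluded_middle_informative _) as [ex|]; [|discriminate].
  intros H. injection H as <-. apply proj2_sig.
Qed.

Lemma mfun_eq e p q : computes e p q -> mfun e p = Some q.
Proof.
  intros Hc. unfold mfun. destruct (excluded_middle_informative _) as [ex|n]; [|exfalso; apply n; eauto].
  f_equal. apply functional_extensionality. intros n. apply (computes_det_pw e p); auto. apply proj2_sig.
Qed.

Theorem lemma28 (nm1 : pcrep)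
  (Hfun : rep_functional nm1)
  (Hst1 : standing nm1)
  (Hclosed : contains_closed nm1)
  (Hunion : closed_union nm1)
  (Hop : closed_zero_op nm1)
  (Hst : standing (compl_closure nm1)) :
  Wred (hat_rep (win_rep nm1)) (hat_rep pl_rep) (hat Win)
       (game_rep (compl_closure nm1)) strat_rep SPE.
Proof.
  destruct Hst1 as [Hdet1 [_ [_ [[e_resc Hresc] [[e_unr Hunr] _]]]]].
  destruct Hclosed as [e_cl Hcl]. destruct Hunion as [e_un Hun]. destruct Hop as [e_zo Hzo].
  exists (mfun eK), (mfun (eH e_cl e_resc e_un e_zo)).
  split; [apply mfun_computable|]. split; [apply mfun_computable|].
  intros Gr HG p xs Hv _.
  destruct (H_names nm1 e_cl e_resc e_un e_zo Hcl Hresc Hun Hzo p xs Hv) as [EFs [W [M [r [Cr [HE [HF [HW [HM Hr]]]]]]]]].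
  pose proof (game_rep_ok nm1 p xs Hv EFs W M r HE HF HW HM Hr) as Grep.
  assert (Hdet : forall z u, Winw (gds xs z) (gA xs z) P1 u \/ Winw (gds xs z) (gA xs z) P2 u).
  { intros z u. destruct (Hunr u (projB 1 (projB z p)) (gA xs z) (proj2 (Hv z))) as [q [_ Hq]].
    exact (Hdet1 (fun v => gds xs z (u ++ v)) _ q Hq). }
  destruct (SPE_exists xs Hdet) as [s0 Hs0].
  destruct (HG r (G xs) Grep (ex_intro _ s0 (conj (antag xs) Hs0))) as [q [Hq [y [Hy [_ Hys]]]]].
  unfold wcomp. rewrite (mfun_eq _ _ _ Cr), Hq.
  rewrite (mfun_eq _ _ _ (eK_ok p q)).
  eexists; split; [reflexivity|].
  exists (fun i => if y (repeat false i ++ [true]) then P1 else P2). split.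
  - intros i. unfold pl_rep, projB. rewrite ofto. cbn [fst]. rewrite Hy.
    destruct (y (repeat false i ++ [true])); reflexivity.
  - intros i. unfold Win. cbn [fst snd].
    destruct (Hdet1 (fst (xs i)) (snd (xs i)) _ (proj2 (Hv i))) as [W1|W2].
    + rewrite (A1 xs y Hys i W1). exact W1.
    + rewrite (A2 xs y Hys i W2). exact W2.
Qed.
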